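(* For every $X\subseteq\mathbb N$ and $\alpha\in(71/72,1]$, the algebra $\mathcal D_{\mathcal K}(X,\alpha)$ is an almost masa of $\mathcal A_0(X)$.
   Context: Fix an orthonormal basis $(e_k)$ of $\ell_2$; $H_n=\mathrm{span}\{e_{2n},e_{2n+1}\}$. $\mathcal A_0$ is the set of $T\in\mathcal B(\ell_2)$ with $\langle Te_k,e_m\rangle\ne0\Rightarrow\{k,m\}\subseteq\{2n,2n+1\}$ for some $n$, written $T=(T_n)$, $T_n\in\mathcal B(H_n)$ the restriction; $\mathcal A_0(X)=\{T\in\mathcal A_0:T_n=0\ \forall n\notin X\}$. For $\alpha\in(71/72,1]$, $f_{\alpha,2n}=\alpha e_{2n}+\sqrt{1-\alpha^2}e_{2n+1}$, $f_{\alpha,2n+1}=\sqrt{1-\alpha^2}e_{2n}-\alpha e_{2n+1}$; $\mathcal D(X,\alpha)$ is the set of $T\in\mathcal A_0(X)$ with $T_n$ diagonal in $\{f_{\alpha,2n},f_{\alpha,2n+1}\}$ for all $n\in X$; $\mathcal D_{\mathcal K}(X,\alpha)=\{S+R:S\in\mathcal D(X,\alpha),R\in\mathcal K(\ell_2)\cap\mathcal A_0(X)\}$. $S,T$ almost commute if $ST-TS$ is compact; an almost masa of a C*-algebra $\mathcal C\subseteq\mathcal B(\ell_2)$ is a C*-subalgebra of $\mathcal C$ maximal under inclusion among C*-subalgebras of $\mathcal C$ whose elements pairwise almost commute. *)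

(* Defs.v *)
From Stdlib Require Import Reals.
From Coquelicot Require Import Coquelicot.
Open Scope R_scope.

Definition sqsum (u : nat -> C) : nat -> R := fun k => (Cmod (u k)) ^ 2.

Record l2 := L2 { lv :> nat -> C ; lv_sq : ex_series (sqsum lv) }.

Definition vnorm (u : nat -> C) : R := sqrt (Series (sqsum u)).

Definition inner (u v : nat -> C) : C :=
  (Series (fun k => Re (Cmult (u k) (Cconj (v k)))),
   Series (fun k => Im (Cmult (u k) (Cconj (v k))))).

Record op := Op {
  app :> l2 -> l2 ;
  op_lin : forall (c d : C) (u v w : l2),
      (forall k, lv w k = Cplus (Cmult c (lv u k)) (Cmult d (lv v k))) ->
      forall k, lv (app w) k = Cplus (Cmult c (lv (app u) k)) (Cmult d (lv (app v) k)) ;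
  op_bdd : exists M : R, forall u : l2, vnorm (app u) <= M * vnorm u }.

Definition is_sum (S T U : op) : Prop :=
  forall (u : l2) k, lv (U u) k = Cplus (lv (S u) k) (lv (T u) k).
Definition is_scal (c : C) (T U : op) : Prop :=
  forall (u : l2) k, lv (U u) k = Cmult c (lv (T u) k).
Definition is_comp (S T U : op) : Prop :=
  forall (u : l2) k, lv (U u) k = lv (S (T u)) k.
Definition is_zero_op (Z : op) : Prop := forall (u : l2) k, lv (Z u) k = RtoC 0.
Definition is_adjoint (T U : op) : Prop :=
  forall u v : l2, inner (T u) v = inner u (U v).

Definition op_norm_cvg (Tn : nat -> op) (T : op) : Prop :=
  forall eps : R, 0 < eps -> exists N : nat, forall n, (N <= n)%nat ->
    forall u : l2, vnorm (fun k => Cminus (lv (Tn n u) k) (lv (T u) k)) <= eps * vnorm u.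

(** compact operator: the image of every bounded sequence has a norm-convergent
    subsequence (with limit in l2), i.e. bounded sets are mapped to relatively
    compact sets *)
Definition compact_op (K : op) : Prop :=
  forall (u : nat -> l2) (M : R), (forall n, vnorm (u n) <= M) ->
    exists (phi : nat -> nat) (w : l2),
      (forall n, (phi n < phi (S n))%nat) /\
      forall eps : R, 0 < eps -> exists N : nat, forall n, (N <= n)%nat ->
        vnorm (fun k => Cminus (lv (K (u (phi n))) k) (lv w k)) <= eps.

Definition almost_commute (S T : op) : Prop :=
  exists K : op, compact_op K /\
    forall (u : l2) k, lv (K u) k = Cminus (lv (S (T u)) k) (lv (T (S u)) k).

Definition cstar_alg (A : op -> Prop) : Prop :=
  (exists Z, A Z /\ is_zero_op Z) /\
  (forall S T U, A S -> A T -> is_sum S T U -> A U) /\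
  (forall c T U, A T -> is_scal c T U -> A U) /\
  (forall S T U, A S -> A T -> is_comp S T U -> A U) /\
  (forall T, A T -> exists U, A U /\ is_adjoint T U) /\
  (forall (Tn : nat -> op) T, (forall n, A (Tn n)) -> op_norm_cvg Tn T -> A T).

Definition cstar_subalg (A Cc : op -> Prop) : Prop :=
  cstar_alg A /\ (forall T, A T -> Cc T).

Definition pairwise_almost_commuting (A : op -> Prop) : Prop :=
  forall S T, A S -> A T -> almost_commute S T.

Definition almost_masa (A Cc : op -> Prop) : Prop :=
  cstar_subalg A Cc /\ pairwise_almost_commuting A /\
  forall B, cstar_subalg B Cc -> pairwise_almost_commuting B ->
    (forall T, A T -> B T) -> forall T, B T -> A T.

Definition is_ONB (e : nat -> l2) : Prop :=
  (forall k m, inner (e k) (e m) = if Nat.eqb k m then RtoC 1 else RtoC 0) /\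
  (forall u : l2, (forall k, inner u (e k) = RtoC 0) -> forall j, lv u j = RtoC 0).

Definition in_block (k n : nat) : Prop := k = (2 * n)%nat \/ k = (2 * n + 1)%nat.

Definition A0 (e : nat -> l2) (T : op) : Prop :=
  forall k m, inner (T (e k)) (e m) <> RtoC 0 -> exists n, in_block k n /\ in_block m n.

(** T_n = 0, i.e. T vanishes on H_n = span{e_2n, e_2n+1} *)
Definition A0X (e : nat -> l2) (X : nat -> Prop) (T : op) : Prop :=
  A0 e T /\ forall n, ~ X n -> forall k, in_block k n -> forall j, lv (T (e k)) j = RtoC 0.

Definition eigvec (T : op) (w : l2) : Prop :=
  exists lam : C, forall j, lv (T w) j = Cmult lam (lv w j).

(** T_n is diagonal in {f_{alpha,2n}, f_{alpha,2n+1}} *)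
Definition diag_f (e : nat -> l2) (alpha : R) (n : nat) (T : op) : Prop :=
  (forall w : l2, (forall j, lv w j = Cplus (Cmult (RtoC alpha) (lv (e (2*n)%nat) j))
                                  (Cmult (RtoC (sqrt (1 - alpha^2))) (lv (e (2*n+1)%nat) j)))
                  -> eigvec T w) /\
  (forall w : l2, (forall j, lv w j = Cminus (Cmult (RtoC (sqrt (1 - alpha^2))) (lv (e (2*n)%nat) j))
                                  (Cmult (RtoC alpha) (lv (e (2*n+1)%nat) j)))
                  -> eigvec T w).

Definition Dset (e : nat -> l2) (X : nat -> Prop) (alpha : R) (T : op) : Prop :=
  A0X e X T /\ forall n, X n -> diag_f e alpha n T.

Definition DK (e : nat -> l2) (X : nat -> Prop) (alpha : R) (T : op) : Prop :=
  exists S R0 : op, Dset e X alpha S /\ compact_op R0 /\ A0X e X R0 /\ is_sum S R0 T.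

(* Main.v *)
Require Import Defs.
From Stdlib Require Import Reals Lra Lia Classical ClassicalEpsilon FunctionalExtensionality.
From Coquelicot Require Import Coquelicot.
Open Scope R_scope.

Ltac cunf := unfold Cminus, Cplus, Cmult, Copp, Cconj, RtoC, Re, Im in *; simpl in *.
Ltac ceq := apply injective_projections; cunf; simpl; ring.

Lemma Cmod2 (z : C) : Cmod z ^ 2 = fst z ^ 2 + snd z ^ 2.
Proof. unfold Cmod. rewrite pow2_sqrt; [reflexivity| nra]. Qed.

Definition isl2 (u : nat -> C) := ex_series (sqsum u).
Definition PE (u v : nat -> C) := forall j, u j = v j.
Definition nsq (u : nat -> C) := Series (sqsum u).

Lemma sqsum_ge0 u k : 0 <= sqsum u k.
Proof. unfold sqsum. rewrite Cmod2. nra. Qed.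

Lemma sqsum_eq u k : sqsum u k = fst (u k) ^ 2 + snd (u k) ^ 2.
Proof. unfold sqsum. apply Cmod2. Qed.

Lemma sum_n_S (a : nat -> R) n : sum_n a (S n) = sum_n a n + a (S n).
Proof. rewrite sum_Sn. reflexivity. Qed.

Lemma sum_n_mono (a : nat -> R) : (forall k, 0 <= a k) ->
  forall n m, (n <= m)%nat -> sum_n a n <= sum_n a m.
Proof. intros H n m Hnm. induction Hnm. lra. rewrite sum_n_S. specialize (H (S m)). lra. Qed.

Lemma sum_n_le (a b : nat -> R) : (forall k, a k <= b k) -> forall n, sum_n a n <= sum_n b n.
Proof. intros H n. induction n. rewrite !sum_O; auto. rewrite !sum_n_S. specialize (H (S n)). lra. Qed.

Lemma ser_fin (a : nat -> R) N : (forall k, (N < k)%nat -> a k = 0) -> is_series a (sum_n a N).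
Proof.
  intros H.
  assert (E: forall n, (N <= n)%nat -> sum_n a n = sum_n a N).
  { intros n Hn; induction Hn. reflexivity. rewrite sum_n_S, IHHn. rewrite (H (S m)) by lia. lra. }
  change (is_lim_seq (sum_n a) (sum_n a N)).
  apply (is_lim_seq_ext_loc (fun _ => sum_n a N)). exists N. intros; symmetry; auto.
  apply is_lim_seq_const.
Qed.

Lemma ser_lim (a : nat -> R) : ex_series a -> is_lim_seq (sum_n a) (Series a).
Proof. intros H. apply Series_correct in H. exact H. Qed.

Lemma ser_bnd (a : nat -> R) B : (forall k, 0 <= a k) -> (forall N, sum_n a N <= B) ->
  ex_series a /\ Series a <= B.
Proof.
  intros H0 HB.
  assert (Hf : ex_finite_lim_seq (sum_n a)).
  { apply ex_finite_lim_seq_incr with B; auto. intros n; rewrite sum_n_S; specialize (H0 (S n)); lra. }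
  destruct Hf as [l Hl].
  split. exists l. exact Hl.
  rewrite (is_series_unique a l Hl).
  assert (Rbar_le l B).
  { apply (is_lim_seq_le (sum_n a) (fun _ => B)); auto. apply is_lim_seq_const. }
  exact H.
Qed.

Lemma ser_psum_le (a : nat -> R) N : (forall k, 0 <= a k) -> ex_series a -> sum_n a N <= Series a.
Proof.
  intros H0 He.
  assert (Hl := ser_lim a He).
  assert (Rbar_le (sum_n a N) (Series a)).
  { apply (is_lim_seq_le_loc (fun _ => sum_n a N) (sum_n a)).
    exists N; intros; apply sum_n_mono; auto. apply is_lim_seq_const. exact Hl. }
  exact H.
Qed.

Lemma Series_ge0 a : (forall k, 0 <= a k) -> ex_series a -> 0 <= Series a.
Proof. intros H He. eapply Rle_trans; [|apply (ser_psum_le a 0); auto]. rewrite sum_O; auto. Qed.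

Lemma Series_le_gen (x y : nat -> R) : (forall k, x k <= y k) -> ex_series x -> ex_series y ->
  Series x <= Series y.
Proof.
  intros H Hx Hy.
  assert (Rbar_le (Series x) (Series y)).
  { apply (is_lim_seq_le (sum_n x) (sum_n y)). apply sum_n_le; auto. apply ser_lim; auto. apply ser_lim; auto. }
  exact H0.
Qed.

Lemma exs_lin (p q : R) (x y : nat -> R) : ex_series x -> ex_series y ->
  ex_series (fun k => p * x k + q * y k).
Proof.
  intros Hx Hy. apply (ex_series_plus (fun k => p * x k) (fun k => q * y k)).
  apply (ex_series_scal_l p x Hx). apply (ex_series_scal_l q y Hy).
Qed.

Lemma Ser_lin (p q : R) (x y : nat -> R) : ex_series x -> ex_series y ->
  Series (fun k => p * x k + q * y k) = p * Series x + q * Series y.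
Proof.
  intros Hx Hy. rewrite Series_plus. rewrite !Series_scal_l. reflexivity.
  apply (ex_series_scal_l p x Hx). apply (ex_series_scal_l q y Hy).
Qed.

Lemma exs_ext (x y : nat -> R) : (forall k, x k = y k) -> ex_series x -> ex_series y.
Proof. intros H [l Hl]. exists l. apply (is_series_ext x y l H Hl). Qed.

Lemma exs_le (x y : nat -> R) : (forall k, Rabs (x k) <= y k) -> ex_series y -> ex_series x.
Proof. intros H Hy. apply (ex_series_le x y); auto. Qed.

Lemma Series_zero : Series (fun _ => 0) = 0.
Proof. apply is_series_unique. assert (H := ser_fin (fun _ => 0) 0 (fun _ _ => eq_refl)).
  rewrite sum_O in H. exact H. Qed.

Lemma exs_fin (a : nat -> R) N : (forall k, (N < k)%nat -> a k = 0) -> ex_series a.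
Proof. intros H. eexists. apply ser_fin; eauto. Qed.

Lemma Series_single (a : nat -> R) j : (forall k, k <> j -> a k = 0) -> Series a = a j.
Proof.
  intros H. apply is_series_unique.
  assert (E : sum_n a j = a j).
  { destruct j. rewrite sum_O; auto. rewrite sum_n_S.
    assert (forall m, (m <= j)%nat -> sum_n a m = 0).
    { intros m Hm; induction m. rewrite sum_O; apply H; lia. rewrite sum_n_S, IHm by lia. rewrite H by lia. lra. }
    rewrite H0 by lia. lra. }
  rewrite <- E. apply ser_fin. intros; apply H; lia.
Qed.
Definition rp (u v : nat -> C) k := fst (u k) * fst (v k) + snd (u k) * snd (v k).
Definition ip (u v : nat -> C) k := snd (u k) * fst (v k) - fst (u k) * snd (v k).
Definition cc (u v : nat -> C) k := Cmod (u k) * Cmod (v k).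

Lemma inner_coord u v : inner u v = (Series (rp u v), Series (ip u v)).
Proof. unfold inner. f_equal; apply Series_ext; intros; unfold rp, ip; cunf; ring. Qed.

Lemma Cmod_ge0' z : 0 <= Cmod z.
Proof. apply Cmod_ge_0. Qed.

Lemma rp_le u v k : Rabs (rp u v k) <= cc u v k.
Proof.
  unfold rp, cc, Cmod. destruct (u k) as [a b], (v k) as [c d]. simpl.
  rewrite <- sqrt_mult by (apply Rplus_le_le_0_compat; apply pow2_ge_0). apply Rsqr_incr_0_var. 2: apply sqrt_pos.
  rewrite Rsqr_sqrt by (apply Rmult_le_pos; apply Rplus_le_le_0_compat; apply pow2_ge_0).
  rewrite <- Rsqr_abs. unfold Rsqr. assert (0 <= (a*d - b*c)^2) by apply pow2_ge_0.
  assert (0 <= (a*c + b*d)^2) by apply pow2_ge_0. nra.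
Qed.

Lemma ip_le u v k : Rabs (ip u v k) <= cc u v k.
Proof.
  unfold ip, cc, Cmod. destruct (u k) as [a b], (v k) as [c d]. simpl.
  rewrite <- sqrt_mult by (apply Rplus_le_le_0_compat; apply pow2_ge_0). apply Rsqr_incr_0_var. 2: apply sqrt_pos.
  rewrite Rsqr_sqrt by (apply Rmult_le_pos; apply Rplus_le_le_0_compat; apply pow2_ge_0).
  rewrite <- Rsqr_abs. unfold Rsqr. assert (0 <= (a*d - b*c)^2) by apply pow2_ge_0.
  assert (0 <= (a*c + b*d)^2) by apply pow2_ge_0. nra.
Qed.

Lemma cc_le u v k : cc u v k <= / 2 * sqsum u k + / 2 * sqsum v k.
Proof.
  unfold cc, sqsum. assert (0 <= (Cmod (u k) - Cmod (v k))^2) by apply pow2_ge_0. nra.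
Qed.

Lemma cc_ge0 u v k : 0 <= cc u v k.
Proof. unfold cc. assert (H1 := Cmod_ge0' (u k)). assert (H2 := Cmod_ge0' (v k)). nra. Qed.

Lemma ex_cc u v : isl2 u -> isl2 v -> ex_series (cc u v).
Proof.
  intros Hu Hv. apply (exs_le _ (fun k => / 2 * sqsum u k + / 2 * sqsum v k)).
  intros k. rewrite Rabs_pos_eq by apply cc_ge0. apply cc_le. apply exs_lin; auto.
Qed.

Lemma ex_rp u v : isl2 u -> isl2 v -> ex_series (rp u v).
Proof. intros Hu Hv. apply (exs_le _ (cc u v)). apply rp_le. apply ex_cc; auto. Qed.
Lemma ex_ip u v : isl2 u -> isl2 v -> ex_series (ip u v).
Proof. intros Hu Hv. apply (exs_le _ (cc u v)). apply ip_le. apply ex_cc; auto. Qed.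

Lemma Ser_lin4 (p q r s : R) (x y z t : nat -> R) :
  ex_series x -> ex_series y -> ex_series z -> ex_series t ->
  Series (fun k => p * x k + q * y k + r * z k + s * t k) =
  p * Series x + q * Series y + r * Series z + s * Series t.
Proof.
  intros Hx Hy Hz Ht.
  rewrite (Series_ext _ (fun k => 1 * (p * x k + q * y k) + 1 * (r * z k + s * t k))) by (intros; ring).
  rewrite Ser_lin by (apply exs_lin; auto). rewrite !Ser_lin by auto. ring.
Qed.

Lemma Ser_lin3 (p q r : R) (x y z : nat -> R) :
  ex_series x -> ex_series y -> ex_series z ->
  Series (fun k => p * x k + q * y k + r * z k) = p * Series x + q * Series y + r * Series z.
Proof.
  intros Hx Hy Hz.
  rewrite (Series_ext _ (fun k => p * x k + q * y k + r * z k + 0 * x k)) by (intros; ring).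
  rewrite Ser_lin4 by auto. ring.
Qed.

Lemma inner_ext u u' v v' : PE u u' -> PE v v' -> inner u v = inner u' v'.
Proof. intros H1 H2. unfold inner. f_equal; apply Series_ext; intros; rewrite H1, H2; auto. Qed.

Lemma nsq_ext u u' : PE u u' -> nsq u = nsq u'.
Proof. intros H. unfold nsq. apply Series_ext. intros; unfold sqsum; rewrite H; auto. Qed.

Lemma vnorm_ext u u' : PE u u' -> vnorm u = vnorm u'.
Proof. intros H. unfold vnorm. fold (nsq u). fold (nsq u'). rewrite (nsq_ext u u' H). auto. Qed.

Lemma isl2_ext u u' : PE u u' -> isl2 u -> isl2 u'.
Proof. intros H Hu. apply (exs_ext (sqsum u)); auto. intros; unfold sqsum; rewrite H; auto. Qed.

Lemma isl2_add u v : isl2 u -> isl2 v -> isl2 (fun k => Cplus (u k) (v k)).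
Proof.
  intros Hu Hv. apply (exs_le _ (fun k => 2 * sqsum u k + 2 * sqsum v k)).
  intros k. rewrite Rabs_pos_eq by apply sqsum_ge0. rewrite !sqsum_eq. cunf.
  destruct (u k) as [a b], (v k) as [c d]; simpl.
  assert (0 <= (a - c)^2) by apply pow2_ge_0. assert (0 <= (b - d)^2) by apply pow2_ge_0. nra.
  apply exs_lin; auto.
Qed.

Lemma sqsum_scal c u k : sqsum (fun k => Cmult c (u k)) k = Cmod c ^ 2 * sqsum u k.
Proof. rewrite !sqsum_eq, Cmod2. cunf. ring. Qed.

Lemma isl2_scal c u : isl2 u -> isl2 (fun k => Cmult c (u k)).
Proof.
  intros Hu. apply (exs_ext (fun k => Cmod c ^ 2 * sqsum u k + 0 * sqsum u k)).
  intros; rewrite sqsum_scal; ring. apply exs_lin; auto.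
Qed.

Lemma isl2_lin a u b v : isl2 u -> isl2 v -> isl2 (fun k => Cplus (Cmult a (u k)) (Cmult b (v k))).
Proof. intros. apply isl2_add; apply isl2_scal; auto. Qed.

Lemma isl2_l2 (u : l2) : isl2 u.
Proof. exact (lv_sq u). Qed.
Hint Resolve isl2_l2 : core.

Lemma inner_lin1 (a b : C) u v w : isl2 u -> isl2 v -> isl2 w ->
  inner (fun k => Cplus (Cmult a (u k)) (Cmult b (v k))) w =
  Cplus (Cmult a (inner u w)) (Cmult b (inner v w)).
Proof.
  intros Hu Hv Hw. rewrite !inner_coord. apply injective_projections; simpl.
  - rewrite (Series_ext _ (fun k => fst a * rp u w k + (- snd a) * ip u w k + fst b * rp v w k + (- snd b) * ip v w k))
      by (intros; unfold rp, ip; cunf; ring).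
    rewrite Ser_lin4 by (apply ex_rp || apply ex_ip; auto). cunf. ring.
  - rewrite (Series_ext _ (fun k => snd a * rp u w k + fst a * ip u w k + snd b * rp v w k + fst b * ip v w k))
      by (intros; unfold rp, ip; cunf; ring).
    rewrite Ser_lin4 by (apply ex_rp || apply ex_ip; auto). cunf. ring.
Qed.

Lemma inner_conj u v : inner v u = Cconj (inner u v).
Proof.
  rewrite !inner_coord. unfold Cconj; simpl. f_equal.
  apply Series_ext; intros; unfold rp; ring.
  rewrite <- Series_opp. apply Series_ext; intros; unfold ip; ring.
Qed.

Lemma inner_lin2 (a b : C) u v w : isl2 u -> isl2 v -> isl2 w ->
  inner w (fun k => Cplus (Cmult a (u k)) (Cmult b (v k))) =
  Cplus (Cmult (Cconj a) (inner w u)) (Cmult (Cconj b) (inner w v)).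
Proof.
  intros Hu Hv Hw. rewrite inner_conj, inner_lin1 by auto.
  rewrite (inner_conj w u), (inner_conj w v). ceq.
Qed.

Lemma nsq_ge0 u : isl2 u -> 0 <= nsq u.
Proof. intros H. apply Series_ge0; auto. apply sqsum_ge0. Qed.

Lemma inner_self u : isl2 u -> inner u u = RtoC (nsq u).
Proof.
  intros H. rewrite inner_coord. unfold RtoC. f_equal.
  apply Series_ext; intros; unfold rp; rewrite sqsum_eq; ring.
  rewrite <- Series_zero. apply Series_ext; intros; unfold ip; ring.
Qed.

Lemma vnorm_sq u : isl2 u -> vnorm u ^ 2 = nsq u.
Proof. intros H. unfold vnorm. apply pow2_sqrt. apply nsq_ge0; auto. Qed.

Lemma vnorm_ge0 u : 0 <= vnorm u.
Proof. apply sqrt_pos. Qed.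

Lemma cs_real (A B Cc : R) : 0 <= A -> 0 <= B -> 0 <= Cc ->
  (forall t, 0 <= t * t * A - 2 * t * Cc + B) -> Cc <= sqrt A * sqrt B.
Proof.
  intros HA HB HC H.
  assert (Cc * Cc <= A * B).
  { destruct (Req_dec A 0) as [E|E].
    - subst A. destruct (Req_dec Cc 0) as [E2|E2]. subst; nra.
      specialize (H ((B + 1) / (2 * Cc))).
      assert (Hx: (B+1)/(2*Cc) * ((B+1)/(2*Cc)) * 0 - 2 * ((B+1)/(2*Cc)) * Cc + B = -1) by (field; lra).
      rewrite Hx in H; lra.
    - specialize (H (Cc / A)).
      assert (0 < A) by lra.
      assert (Hx : Cc / A * (Cc / A) * A - 2 * (Cc / A) * Cc + B = B - Cc * Cc / A) by (field; lra).
      rewrite Hx in H.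
      assert (Cc * Cc / A <= B) by lra.
      apply (Rmult_le_compat_r A) in H1; [|lra]. unfold Rdiv in H1.
      rewrite Rmult_assoc, Rinv_l in H1 by lra. nra. }
  rewrite <- sqrt_mult by auto. rewrite <- (sqrt_square Cc) by auto. apply sqrt_le_1_alt. auto.
Qed.

Lemma cs_series u v : isl2 u -> isl2 v -> Series (cc u v) <= vnorm u * vnorm v.
Proof.
  intros Hu Hv. unfold vnorm. fold (nsq u) (nsq v).
  apply cs_real. apply nsq_ge0; auto. apply nsq_ge0; auto. apply Series_ge0. apply cc_ge0. apply ex_cc; auto.
  intros t.
  assert (E : Series (fun k => (t * Cmod (u k) - Cmod (v k)) ^ 2) = t * t * nsq u - 2 * t * Series (cc u v) + nsq v).
  { rewrite (Series_ext _ (fun k => (t * t) * sqsum u k + (- 2 * t) * cc u v k + 1 * sqsum v k))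
      by (intros; unfold sqsum, cc; ring).
    rewrite Ser_lin3 by (auto; apply ex_cc; auto). unfold nsq; ring. }
  rewrite <- E. apply Series_ge0. intros; apply pow2_ge_0.
  apply (exs_ext (fun k => (t * t) * sqsum u k + (- 2 * t) * cc u v k + 1 * sqsum v k)).
  intros; unfold sqsum, cc; ring.
  apply (exs_ext (fun k => 1 * ((t * t) * sqsum u k + (- 2 * t) * cc u v k) + 1 * sqsum v k)).
  intros; ring. apply exs_lin; auto. apply exs_lin; auto. apply ex_cc; auto.
Qed.

Lemma Series_abs_le (x y : nat -> R) : (forall k, Rabs (x k) <= y k) -> ex_series x -> ex_series y ->
  Rabs (Series x) <= Series y.
Proof.
  intros H Hx Hy. apply Rabs_le. split.
  - rewrite <- Series_opp. apply Series_le_gen; auto. intros k; specialize (H k). apply Rabs_le_between in H. lra.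
    apply (exs_ext (fun k => (-1) * y k + 0 * y k)). intros; ring. apply exs_lin; auto.
  - apply Series_le_gen; auto. intros k; specialize (H k). apply Rabs_le_between in H. lra.
Qed.

Lemma cs_re u v : isl2 u -> isl2 v -> Rabs (fst (inner u v)) <= vnorm u * vnorm v.
Proof.
  intros Hu Hv. rewrite inner_coord; simpl. eapply Rle_trans; [|apply cs_series; auto].
  apply Series_abs_le. apply rp_le. apply ex_rp; auto. apply ex_cc; auto.
Qed.

Lemma cs_im u v : isl2 u -> isl2 v -> Rabs (snd (inner u v)) <= vnorm u * vnorm v.
Proof.
  intros Hu Hv. rewrite inner_coord; simpl. eapply Rle_trans; [|apply cs_series; auto].
  apply Series_abs_le. apply ip_le. apply ex_ip; auto. apply ex_cc; auto.
Qed.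

Lemma nsq_add u v : isl2 u -> isl2 v ->
  nsq (fun k => Cplus (u k) (v k)) = nsq u + nsq v + 2 * fst (inner u v).
Proof.
  intros Hu Hv. rewrite inner_coord; simpl. unfold nsq.
  rewrite (Series_ext _ (fun k => 1 * sqsum u k + 1 * sqsum v k + 2 * rp u v k))
    by (intros; rewrite !sqsum_eq; unfold rp; cunf; ring).
  rewrite Ser_lin3 by (auto; apply ex_rp; auto). ring.
Qed.

Lemma vnorm_tri u v : isl2 u -> isl2 v -> vnorm (fun k => Cplus (u k) (v k)) <= vnorm u + vnorm v.
Proof.
  intros Hu Hv. unfold vnorm at 1. fold (nsq (fun k => Cplus (u k) (v k))).
  rewrite nsq_add by auto.
  rewrite <- (sqrt_pow2 (vnorm u + vnorm v)) by (assert (H1:=vnorm_ge0 u); assert (H2:=vnorm_ge0 v); lra).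
  apply sqrt_le_1_alt.
  assert (H := cs_re u v Hu Hv). apply Rabs_le_between in H.
  rewrite <- (vnorm_sq u), <- (vnorm_sq v) by auto. nra.
Qed.

Lemma nsq_scal c u : nsq (fun k => Cmult c (u k)) = Cmod c ^ 2 * nsq u.
Proof. unfold nsq. rewrite <- Series_scal_l. apply Series_ext; intros. apply sqsum_scal. Qed.

Lemma vnorm_scal c u : isl2 u -> vnorm (fun k => Cmult c (u k)) = Cmod c * vnorm u.
Proof.
  intros H. unfold vnorm. fold (nsq (fun k => Cmult c (u k))) (nsq u). rewrite nsq_scal.
  rewrite sqrt_mult_alt. rewrite sqrt_pow2 by apply Cmod_ge0'. auto. apply pow2_ge_0.
Qed.

Lemma sqsum_le_nsq u j : isl2 u -> sqsum u j <= nsq u.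
Proof.
  intros H. eapply Rle_trans; [|apply ser_psum_le; auto; apply sqsum_ge0].
  destruct j. rewrite sum_O; lra. rewrite sum_n_S.
  assert (0 <= sum_n (sqsum u) j). { eapply Rle_trans; [|apply (sum_n_mono _ (sqsum_ge0 u) 0 j); lia]. rewrite sum_O. apply sqsum_ge0. }
  lra.
Qed.

Lemma nsq0_zero u : isl2 u -> nsq u = 0 -> forall j, u j = RtoC 0.
Proof.
  intros H H0 j. assert (H1 := sqsum_le_nsq u j H). assert (H2 := sqsum_ge0 u j).
  rewrite sqsum_eq in H1. destruct (u j) as [a b]; simpl in *. unfold RtoC. f_equal; nra.
Qed.

Lemma vnorm0_zero u : isl2 u -> vnorm u = 0 -> forall j, u j = RtoC 0.
Proof. intros H H0. apply nsq0_zero; auto. rewrite <- vnorm_sq, H0 by auto. ring. Qed.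
Lemma isl2_sub u v : isl2 u -> isl2 v -> isl2 (fun k => Cminus (u k) (v k)).
Proof. intros Hu Hv. apply (isl2_ext (fun k => Cplus (Cmult (RtoC 1) (u k)) (Cmult (RtoC (-1)) (v k)))).
  intros k; ceq. apply isl2_lin; auto. Qed.

Definition l2add (u v : l2) : l2 := L2 (fun k => Cplus (u k) (v k)) (isl2_add u v (lv_sq u) (lv_sq v)).
Definition l2scal (c : C) (u : l2) : l2 := L2 (fun k => Cmult c (u k)) (isl2_scal c u (lv_sq u)).
Definition l2sub (u v : l2) : l2 := L2 (fun k => Cminus (u k) (v k)) (isl2_sub u v (lv_sq u) (lv_sq v)).
Definition l2lin (a : C) (u : l2) (b : C) (v : l2) : l2 :=
  L2 (fun k => Cplus (Cmult a (u k)) (Cmult b (v k))) (isl2_lin a u b v (lv_sq u) (lv_sq v)).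

Lemma isl2_zero : isl2 (fun _ => RtoC 0).
Proof. apply (exs_fin _ 0). intros; rewrite sqsum_eq; simpl; ring. Qed.
Definition l2z : l2 := L2 (fun _ => RtoC 0) isl2_zero.

Definition dlt (j : nat) : nat -> C := fun k => if Nat.eqb k j then RtoC 1 else RtoC 0.
Lemma isl2_dlt j : isl2 (dlt j).
Proof. apply (exs_fin _ j). intros k Hk. rewrite sqsum_eq. unfold dlt. destruct (Nat.eqb_spec k j). lia. simpl; ring. Qed.
Definition l2d (j : nat) : l2 := L2 (dlt j) (isl2_dlt j).

Definition finv (c : nat -> C) (N : nat) : nat -> C := fun k => if Nat.leb k N then c k else RtoC 0.
Lemma isl2_finv c N : isl2 (finv c N).
Proof. apply (exs_fin _ N). intros k Hk. rewrite sqsum_eq. unfold finv. destruct (Nat.leb_spec k N). lia. simpl; ring. Qed.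
Definition l2fin (c : nat -> C) (N : nat) : l2 := L2 (finv c N) (isl2_finv c N).

Lemma nsq_zero : nsq (fun _ => RtoC 0) = 0.
Proof. unfold nsq. etransitivity; [|apply Series_zero]. apply Series_ext. intros; rewrite sqsum_eq; simpl; ring. Qed.
Lemma vnorm_zero : vnorm (fun _ => RtoC 0) = 0.
Proof. unfold vnorm. fold (nsq (fun _ => RtoC 0)). rewrite nsq_zero. apply sqrt_0. Qed.

Lemma inner_dlt_r u j : inner u (dlt j) = u j.
Proof.
  rewrite inner_coord. destruct (u j) as [a b] eqn:E. f_equal.
  - rewrite (Series_single _ j). unfold rp, dlt. rewrite Nat.eqb_refl, E; simpl; ring.
    intros k Hk. unfold rp, dlt. destruct (Nat.eqb_spec k j); [lia|]. simpl; ring.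
  - rewrite (Series_single _ j). unfold ip, dlt. rewrite Nat.eqb_refl, E; simpl; ring.
    intros k Hk. unfold ip, dlt. destruct (Nat.eqb_spec k j); [lia|]. simpl; ring.
Qed.

Lemma inner_dlt_l u j : inner (dlt j) u = Cconj (u j).
Proof. rewrite inner_conj, inner_dlt_r. auto. Qed.

Lemma inner_zero_l v : inner (fun _ => RtoC 0) v = RtoC 0.
Proof. rewrite inner_coord. unfold RtoC. f_equal; (etransitivity; [|apply Series_zero]); apply Series_ext; intros; unfold rp, ip; simpl; ring. Qed.

Lemma inner_zero_r v : inner v (fun _ => RtoC 0) = RtoC 0.
Proof. rewrite inner_conj, inner_zero_l. ceq. Qed.

Lemma inner_sub u v w : isl2 u -> isl2 v -> isl2 w ->
  inner (fun k => Cminus (u k) (v k)) w = Cminus (inner u w) (inner v w).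
Proof.
  intros. rewrite (inner_ext _ (fun k => Cplus (Cmult (RtoC 1) (u k)) (Cmult (RtoC (-1)) (v k))) w w).
  rewrite inner_lin1 by auto. ceq. intros k; ceq. intros k; auto.
Qed.

Lemma inner_add u v w : isl2 u -> isl2 v -> isl2 w ->
  inner (fun k => Cplus (u k) (v k)) w = Cplus (inner u w) (inner v w).
Proof.
  intros. rewrite (inner_ext _ (fun k => Cplus (Cmult (RtoC 1) (u k)) (Cmult (RtoC 1) (v k))) w w).
  rewrite inner_lin1 by auto. ceq. intros k; ceq. intros k; auto.
Qed.

Lemma inner_scal c u w : isl2 u -> isl2 w ->
  inner (fun k => Cmult c (u k)) w = Cmult c (inner u w).
Proof.
  intros. rewrite (inner_ext _ (fun k => Cplus (Cmult c (u k)) (Cmult (RtoC 0) (u k))) w w).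
  rewrite inner_lin1 by auto. ceq. intros k; ceq. intros k; auto.
Qed.

Lemma op_ext (T : op) (x y : l2) : PE x y -> PE (T x) (T y).
Proof.
  intros H. intros k.
  assert (H2 := op_lin T (RtoC 1) (RtoC 0) y y x). 
  rewrite H2. ceq. intros j. rewrite H. ceq.
Qed.

Lemma op_scal (T : op) c (x z : l2) : PE z (fun k => Cmult c (x k)) -> PE (T z) (fun k => Cmult c (T x k)).
Proof.
  intros H k. rewrite (op_lin T c (RtoC 0) x x z). ceq. intros j; rewrite H; ceq.
Qed.

Lemma op_zero (T : op) (z : l2) : PE z (fun _ => RtoC 0) -> PE (T z) (fun _ => RtoC 0).
Proof.
  intros H k. rewrite (op_lin T (RtoC 0) (RtoC 0) z z z). ceq. intros j; rewrite H; ceq.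
Qed.

Lemma op_add (T : op) (x y z : l2) : PE z (fun k => Cplus (x k) (y k)) -> PE (T z) (fun k => Cplus (T x k) (T y k)).
Proof.
  intros H k. rewrite (op_lin T (RtoC 1) (RtoC 1) x y z). ceq. intros j; rewrite H; ceq.
Qed.

Lemma op_sub (T : op) (x y z : l2) : PE z (fun k => Cminus (x k) (y k)) -> PE (T z) (fun k => Cminus (T x k) (T y k)).
Proof.
  intros H k. rewrite (op_lin T (RtoC 1) (RtoC (-1)) x y z). ceq. intros j; rewrite H; ceq.
Qed.

Lemma op_bound (T : op) : exists M, 0 <= M /\ forall u, vnorm (T u) <= M * vnorm u.
Proof.
  destruct (op_bdd T) as [M HM]. exists (Rmax M 0). split. apply Rmax_r.
  intros u. eapply Rle_trans. apply HM. apply Rmult_le_compat_r. apply vnorm_ge0. apply Rmax_l.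
Qed.

Lemma op_diff (T : op) M : (forall u, vnorm (T u) <= M * vnorm u) -> forall x y : l2,
  vnorm (fun k => Cminus (T x k) (T y k)) <= M * vnorm (fun k => Cminus (x k) (y k)).
Proof.
  intros HM x y. rewrite <- (vnorm_ext (T (l2sub x y))).
  replace (vnorm (fun k => Cminus (x k) (y k))) with (vnorm (l2sub x y)) by (apply vnorm_ext; intros k; reflexivity).
  apply HM. apply op_sub. intros k; reflexivity.
Qed.

Program Definition opz : op := Op (fun _ => l2z) _ _.
Next Obligation. simpl. ceq. Qed.
Next Obligation. exists 0. intros u. simpl. rewrite vnorm_zero. lra. Qed.

Program Definition opadd (S T : op) : op := Op (fun u => l2add (S u) (T u)) _ _.
Next Obligation.
  simpl. rewrite (op_lin S c d u v w H), (op_lin T c d u v w H). ceq.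
Qed.
Next Obligation.
  destruct (op_bound S) as [M1 [H1 HM1]]. destruct (op_bound T) as [M2 [H2 HM2]].
  exists (M1 + M2). intros u. simpl. eapply Rle_trans. apply vnorm_tri; auto.
  specialize (HM1 u); specialize (HM2 u). lra.
Qed.

Program Definition opscal (c : C) (T : op) : op := Op (fun u => l2scal c (T u)) _ _.
Next Obligation.
  simpl. rewrite (op_lin T c0 d u v w H). ceq.
Qed.
Next Obligation.
  destruct (op_bound T) as [M1 [H1 HM1]].
  exists (Cmod c * M1). intros u. simpl. rewrite vnorm_scal by auto.
  rewrite Rmult_assoc. apply Rmult_le_compat_l. apply Cmod_ge0'. auto.
Qed.

Program Definition opcomp (S T : op) : op := Op (fun u => S (T u)) _ _.
Next Obligation.
  apply (op_lin S c d (T u) (T v) (T w)). intros j. apply (op_lin T c d u v w H).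
Qed.
Next Obligation.
  destruct (op_bound S) as [M1 [H1 HM1]]. destruct (op_bound T) as [M2 [H2 HM2]].
  exists (M1 * M2). intros u. eapply Rle_trans. apply HM1. rewrite Rmult_assoc.
  apply Rmult_le_compat_l; auto.
Qed.

Definition opsub (S T : op) : op := opadd S (opscal (RtoC (-1)) T).
Lemma lim_eps (a : nat -> R) (l : R) : is_lim_seq a l ->
  forall eps, 0 < eps -> exists N, forall n, (N <= n)%nat -> Rabs (a n - l) < eps.
Proof.
  intros H eps He. apply is_lim_seq_spec in H. destruct (H (mkposreal eps He)) as [N HN].
  exists N. intros n Hn. apply (HN n Hn).
Qed.

Lemma eps_lim (a : nat -> R) (l : R) :
  (forall eps, 0 < eps -> exists N, forall n, (N <= n)%nat -> Rabs (a n - l) <= eps) -> is_lim_seq a l.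
Proof.
  intros H. apply is_lim_seq_spec. intros eps. destruct (H (eps / 2)) as [N HN].
  destruct eps; simpl; lra. exists N. intros n Hn. specialize (HN n Hn). destruct eps; simpl in *; lra.
Qed.

Lemma lim_uniq (a : nat -> R) (l1 l2 : R) : is_lim_seq a l1 -> is_lim_seq a l2 -> l1 = l2.
Proof.
  intros H1 H2. apply is_lim_seq_unique in H1. apply is_lim_seq_unique in H2.
  rewrite H1 in H2. injection H2; auto.
Qed.

Fixpoint csum (f : nat -> C) (N : nat) : C :=
  match N with O => f O | S n => Cplus (csum f n) (f (S n)) end.

Lemma csum_fst f N : fst (csum f N) = sum_n (fun k => fst (f k)) N.
Proof. induction N; simpl. rewrite sum_O; auto. rewrite sum_n_S, <- IHN. auto. Qed.
Lemma csum_snd f N : snd (csum f N) = sum_n (fun k => snd (f k)) N.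
Proof. induction N; simpl. rewrite sum_O; auto. rewrite sum_n_S, <- IHN. auto. Qed.

Lemma csum_ext f g N : (forall k, f k = g k) -> csum f N = csum g N.
Proof. intros H; induction N; simpl; rewrite ?IHN, H; auto. Qed.

Lemma isl2_csum (c : nat -> C) (g : nat -> nat -> C) N : (forall k, isl2 (g k)) ->
  isl2 (fun j => csum (fun k => Cmult (c k) (g k j)) N).
Proof.
  intros H. induction N; simpl.
  - apply isl2_scal; auto.
  - apply isl2_add; auto. apply isl2_scal; auto.
Qed.

Lemma inner_csum (c : nat -> C) (g : nat -> nat -> C) N v : (forall k, isl2 (g k)) -> isl2 v ->
  inner (fun j => csum (fun k => Cmult (c k) (g k j)) N) v = csum (fun k => Cmult (c k) (inner (g k) v)) N.
Proof.
  intros H Hv. induction N; simpl.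
  - apply inner_scal; auto.
  - rewrite inner_add; auto. rewrite IHN, inner_scal; auto. apply isl2_csum; auto. apply isl2_scal; auto.
Qed.

Lemma finv_S c N : PE (finv c (S N)) (fun k => Cplus (Cmult (RtoC 1) (finv c N k)) (Cmult (c (S N)) (dlt (S N) k))).
Proof.
  intros k. unfold finv, dlt.
  destruct (Nat.leb_spec k N), (Nat.eqb_spec k (S N)), (Nat.leb_spec k (S N)); try lia; try ceq.
  subst. ceq.
Qed.

Lemma op_fin (T : op) (c : nat -> C) N :
  PE (T (l2fin c N)) (fun j => csum (fun k => Cmult (c k) (T (l2d k) j)) N).
Proof.
  induction N; simpl.
  - apply op_scal. intros k. simpl. unfold finv, dlt. destruct k; simpl. ceq. ceq.
  - intros j. rewrite (op_lin T (RtoC 1) (c (S N)) (l2fin c N) (l2d (S N)) (l2fin c (S N))).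
    rewrite IHN. ceq. apply finv_S.
Qed.

Lemma sqsum_finv_diff u N k :
  sqsum (fun k => Cminus (finv u N k) (u k)) k = (if Nat.leb k N then 0 else sqsum u k).
Proof. rewrite !sqsum_eq. unfold finv. destruct (Nat.leb k N); cunf; ring. Qed.

Lemma nsq_trunc u N : isl2 u -> nsq (fun k => Cminus (finv u N k) (u k)) = Series (sqsum u) - sum_n (sqsum u) N.
Proof.
  intros H. unfold nsq. rewrite (Series_ext _ (fun k => if Nat.leb k N then 0 else sqsum u k)) by apply sqsum_finv_diff.
  assert (E1 : Series (fun k => if Nat.leb k N then sqsum u k else 0) = sum_n (sqsum u) N).
  { apply is_series_unique. rewrite <- (sum_n_ext_loc (fun k => if Nat.leb k N then sqsum u k else 0)).
    apply ser_fin. intros k Hk. destruct (Nat.leb_spec k N); auto; lia.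
    intros k Hk. destruct (Nat.leb_spec k N); auto; lia. }
  assert (Ex1 : ex_series (fun k => if Nat.leb k N then sqsum u k else 0)).
  { apply (exs_fin _ N). intros k Hk. destruct (Nat.leb_spec k N); auto; lia. }
  assert (Ex2 : ex_series (fun k => if Nat.leb k N then 0 else sqsum u k)).
  { apply (exs_le _ (sqsum u)); auto. intros k. destruct (Nat.leb k N). rewrite Rabs_R0; apply sqsum_ge0.
    rewrite Rabs_pos_eq; [lra|apply sqsum_ge0]. }
  rewrite <- E1. rewrite (Series_ext (sqsum u) (fun k => (if Nat.leb k N then sqsum u k else 0) + (if Nat.leb k N then 0 else sqsum u k))).
  rewrite Series_plus by auto. ring. intros k; destruct (Nat.leb k N); ring.
Qed.

Lemma trunc_conv u : isl2 u -> forall eps, 0 < eps -> exists N0, forall N, (N0 <= N)%nat ->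
  vnorm (fun k => Cminus (finv u N k) (u k)) <= eps.
Proof.
  intros H eps He. destruct (lim_eps _ _ (ser_lim _ H) (eps * eps)) as [N0 HN0]. nra.
  exists N0. intros N HN. specialize (HN0 N HN).
  unfold vnorm. fold (nsq (fun k => Cminus (finv u N k) (u k))). rewrite nsq_trunc by auto.
  rewrite <- (sqrt_square eps) by lra. apply sqrt_le_1_alt.
  assert (sum_n (sqsum u) N <= Series (sqsum u)) by (apply ser_psum_le; auto; apply sqsum_ge0).
  rewrite Rabs_left1 in HN0; lra.
Qed.

Definition adjf (T : op) (v : l2) : nat -> C := fun j => inner v (T (l2d j)).

Lemma sqsum_conj (c : C) : fst (Cmult c (Cconj c)) = Cmod c ^ 2.
Proof. rewrite Cmod2. cunf. ring. Qed.

Lemma nsq_finv c N : nsq (finv c N) = sum_n (sqsum c) N.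
Proof.
  unfold nsq. apply is_series_unique. rewrite <- (sum_n_ext_loc (sqsum (finv c N))).
  apply ser_fin. intros k Hk. rewrite sqsum_eq. unfold finv. destruct (Nat.leb_spec k N). lia. simpl; ring.
  intros k Hk. unfold sqsum, finv. destruct (Nat.leb_spec k N). auto. lia.
Qed.

Lemma inner_T_fin (T : op) (c : nat -> C) N (v : l2) :
  inner (T (l2fin c N)) v = csum (fun k => Cmult (c k) (inner (T (l2d k)) v)) N.
Proof.
  rewrite (inner_ext _ (fun j => csum (fun k => Cmult (c k) (T (l2d k) j)) N) v v).
  apply inner_csum; auto. apply op_fin. intros k; auto.
Qed.

Lemma adj_psum (T : op) M : 0 <= M -> (forall u, vnorm (T u) <= M * vnorm u) ->
  forall v N, sum_n (sqsum (adjf T v)) N <= M * M * nsq v.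
Proof.
  intros HM0 HM v N. set (c := adjf T v). set (S := sum_n (sqsum c) N).
  assert (HS0 : 0 <= S). { unfold S. eapply Rle_trans; [|apply (sum_n_mono _ (sqsum_ge0 c) 0 N); lia]. rewrite sum_O. apply sqsum_ge0. }
  assert (E : fst (inner (T (l2fin c N)) v) = S).
  { rewrite inner_T_fin, csum_fst. unfold S. apply sum_n_ext. intros k.
    rewrite (inner_conj v). unfold c, adjf. apply sqsum_conj. }
  assert (Hx : vnorm (l2fin c N) = sqrt S). { unfold vnorm. simpl. fold (nsq (finv c N)). rewrite nsq_finv. auto. }
  assert (H1 := cs_re (T (l2fin c N)) v (lv_sq _) (lv_sq _)). rewrite E in H1.
  assert (H2 := HM (l2fin c N)). rewrite Hx in H2.
  assert (H3 : S <= M * sqrt S * vnorm v).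
  { eapply Rle_trans. apply Rle_abs. eapply Rle_trans. apply H1. apply Rmult_le_compat_r. apply vnorm_ge0. auto. }
  assert (Hs : sqrt S * sqrt S = S) by (apply sqrt_sqrt; auto).
  assert (H4 : sqrt S <= M * vnorm v).
  { destruct (Req_dec (sqrt S) 0) as [Z|Z]. rewrite Z. apply Rmult_le_pos; auto. apply vnorm_ge0.
    assert (0 < sqrt S) by (assert (H5 := sqrt_pos S); lra).
    apply (Rmult_le_reg_r (sqrt S)); auto. nra. }
  rewrite <- (vnorm_sq v) by auto. rewrite <- Hs.
  assert (0 <= sqrt S) by apply sqrt_pos. nra.
Qed.

Lemma isl2_adjf (T : op) v : isl2 (adjf T v).
Proof.
  destruct (op_bound T) as [M [HM0 HM]].
  apply (ser_bnd _ (M * M * nsq v)). apply sqsum_ge0. apply adj_psum; auto.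
Qed.

Lemma adj_bound (T : op) M : 0 <= M -> (forall u, vnorm (T u) <= M * vnorm u) ->
  forall v : l2, vnorm (adjf T v) <= M * vnorm v.
Proof.
  intros HM0 HM v. destruct (ser_bnd _ (M * M * nsq v) (sqsum_ge0 _) (adj_psum T M HM0 HM v)) as [_ H].
  unfold vnorm at 1. fold (nsq (adjf T v)).
  rewrite <- (sqrt_pow2 (M * vnorm v)) by (apply Rmult_le_pos; auto; apply vnorm_ge0).
  apply sqrt_le_1_alt. rewrite <- (vnorm_sq v) in H by auto. unfold nsq. nra.
Qed.

Program Definition adj (T : op) : op := Op (fun v => L2 (adjf T v) (isl2_adjf T v)) _ _.
Next Obligation.
  simpl. unfold adjf. rewrite (inner_ext _ (fun k => Cplus (Cmult c (u k)) (Cmult d (v k))) (T (l2d k)) (T (l2d k))) by (auto; intros j; auto).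
  apply inner_lin1; auto.
Qed.
Next Obligation.
  destruct (op_bound T) as [M [HM0 HM]]. exists M. intros v. simpl. apply adj_bound; auto.
Qed.

Lemma adj_is_adjoint (T : op) : is_adjoint T (adj T).
Proof.
  intros u v. destruct (op_bound T) as [M [HM0 HM]].
  set (a := adjf T v).
  assert (Hpart : forall N, inner (T (l2fin u N)) v = (sum_n (rp u a) N, sum_n (ip u a) N)).
  { intros N. rewrite inner_T_fin. apply injective_projections; simpl; [rewrite csum_fst|rewrite csum_snd];
    apply sum_n_ext; intros k; unfold rp, ip, a, adjf; rewrite (inner_conj v); cunf; ring. }
  assert (Hconv : forall eps, 0 < eps -> exists N0, forall N, (N0 <= N)%nat ->
    Rabs (fst (inner (T (l2fin u N)) v) - fst (inner (T u) v)) <= eps /\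
    Rabs (snd (inner (T (l2fin u N)) v) - snd (inner (T u) v)) <= eps).
  { intros eps He.
    destruct (trunc_conv u (lv_sq u) (eps / (M * vnorm v + 1))) as [N0 HN0].
    apply Rdiv_lt_0_compat; auto. assert (H := vnorm_ge0 v). nra.
    exists N0. intros N HN. specialize (HN0 N HN).
    assert (Hd := op_diff T M HM (l2fin u N) u).
    assert (Es : inner (fun k => Cminus (T (l2fin u N) k) (T u k)) v = Cminus (inner (T (l2fin u N)) v) (inner (T u) v)) by (apply inner_sub; auto).
    replace (fst (inner (T (l2fin u N)) v) - fst (inner (T u) v)) with (fst (inner (fun k => Cminus (T (l2fin u N) k) (T u k)) v)) by (rewrite Es; cunf; ring).
    replace (snd (inner (T (l2fin u N)) v) - snd (inner (T u) v)) with (snd (inner (fun k => Cminus (T (l2fin u N) k) (T u k)) v)) by (rewrite Es; cunf; ring).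
    assert (Hb : vnorm (fun k => Cminus (T (l2fin u N) k) (T u k)) * vnorm v <= eps).
    { assert (H0 := vnorm_ge0 v). assert (H1 := vnorm_ge0 (fun k => Cminus (T (l2fin u N) k) (T u k))).
      assert (H2 : vnorm (fun k => Cminus (T (l2fin u N) k) (T u k)) <= M * (eps / (M * vnorm v + 1))).
      { eapply Rle_trans. apply Hd. apply Rmult_le_compat_l; auto. }
      assert (H3 : M * (eps / (M * vnorm v + 1)) * vnorm v <= eps).
      { assert (HD : 0 < M * vnorm v + 1) by nra.
        replace (M * (eps / (M * vnorm v + 1)) * vnorm v) with (eps * (M * vnorm v / (M * vnorm v + 1))) by (field; lra).
        assert (Hq : M * vnorm v / (M * vnorm v + 1) <= 1).
        { unfold Rdiv. apply (Rmult_le_reg_r (M * vnorm v + 1)); auto.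
          rewrite Rmult_assoc, Rinv_l, Rmult_1_l, Rmult_1_r by lra. lra. }
        nra. }
      nra. }
    split; (eapply Rle_trans; [|apply Hb]); [apply cs_re|apply cs_im]; try apply isl2_sub; auto. }
  rewrite !inner_coord. simpl. f_equal.
  - apply (lim_uniq (sum_n (rp u a))). apply eps_lim. intros eps He. destruct (Hconv eps He) as [N0 HN0].
    exists N0; intros N HN. specialize (HN0 N HN). rewrite Hpart, (inner_coord (T u)) in HN0. cbn [fst snd] in HN0. tauto.
    apply ser_lim. apply ex_rp; auto. apply isl2_adjf.
  - apply (lim_uniq (sum_n (ip u a))). apply eps_lim. intros eps He. destruct (Hconv eps He) as [N0 HN0].
    exists N0; intros N HN. specialize (HN0 N HN). rewrite Hpart, (inner_coord (T u)) in HN0. cbn [fst snd] in HN0. tauto.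
    apply ser_lim. apply ex_ip; auto. apply isl2_adjf.
Qed.
Lemma fst_le_vnorm u j : isl2 u -> Rabs (fst (u j)) <= vnorm u.
Proof.
  intros H. unfold vnorm. fold (nsq u). rewrite <- sqrt_Rsqr_abs. apply sqrt_le_1_alt.
  assert (H1 := sqsum_le_nsq u j H). rewrite sqsum_eq in H1. unfold Rsqr. assert (0 <= snd (u j) ^ 2) by apply pow2_ge_0. nra.
Qed.
Lemma snd_le_vnorm u j : isl2 u -> Rabs (snd (u j)) <= vnorm u.
Proof.
  intros H. unfold vnorm. fold (nsq u). rewrite <- sqrt_Rsqr_abs. apply sqrt_le_1_alt.
  assert (H1 := sqsum_le_nsq u j H). rewrite sqsum_eq in H1. unfold Rsqr. assert (0 <= fst (u j) ^ 2) by apply pow2_ge_0. nra.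
Qed.

Lemma lim_sum_n (f : nat -> nat -> R) (g : nat -> R) K :
  (forall j, is_lim_seq (fun m => f m j) (g j)) -> is_lim_seq (fun m => sum_n (f m) K) (sum_n g K).
Proof.
  intros H. induction K.
  - rewrite sum_O. apply (is_lim_seq_ext (fun m => f m O)). intros; rewrite sum_O; auto. auto.
  - rewrite sum_n_S. apply (is_lim_seq_ext (fun m => sum_n (f m) K + f m (S K))). intros; rewrite sum_n_S; auto.
    apply is_lim_seq_plus'; auto.
Qed.

Definition ccauchy (x : nat -> l2) := forall eps, 0 < eps -> exists N, forall n m, (N <= n)%nat -> (N <= m)%nat ->
  vnorm (fun k => Cminus (x n k) (x m k)) <= eps.

Lemma coord_lim (x : nat -> l2) (j : nat) (sel : C -> R) :
  (forall u, isl2 u -> forall j, Rabs (sel (u j)) <= vnorm u) ->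
  (forall a b, sel (Cminus a b) = sel a - sel b) ->
  ccauchy x -> is_lim_seq (fun n => sel (x n j)) (real (Lim_seq (fun n => sel (x n j)))).
Proof.
  intros Hs Hm Hc. cut (ex_finite_lim_seq (fun n => sel (x n j))).
  { intros [l Hl]. rewrite (is_lim_seq_unique _ _ Hl). exact Hl. }
  apply ex_lim_seq_cauchy_corr.
  intros eps. destruct (Hc (eps / 2)) as [N HN]. destruct eps; simpl; lra.
  exists N. intros n m Hn Hm'. specialize (HN n m Hn Hm').
  rewrite <- Hm. eapply Rle_lt_trans. apply (Hs (fun k => Cminus (x n k) (x m k))). apply isl2_sub; auto.
  eapply Rle_lt_trans. apply HN. destruct eps; simpl; lra.
Qed.

Lemma l2_complete (x : nat -> l2) : ccauchy x ->
  exists w : l2, forall eps, 0 < eps -> exists N, forall n, (N <= n)%nat ->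
    vnorm (fun k => Cminus (x n k) (w k)) <= eps.
Proof.
  intros Hc.
  set (wf := fun j => (real (Lim_seq (fun n => fst (x n j))), real (Lim_seq (fun n => snd (x n j))))).
  assert (Hf : forall j, is_lim_seq (fun n => fst (x n j)) (fst (wf j))).
  { intros j. apply (coord_lim x j fst); auto. intros; apply fst_le_vnorm; auto. }
  assert (Hsn : forall j, is_lim_seq (fun n => snd (x n j)) (snd (wf j))).
  { intros j. apply (coord_lim x j snd); auto. intros; apply snd_le_vnorm; auto. }
  assert (Key : forall eps, 0 < eps -> exists N, forall n, (N <= n)%nat ->
     isl2 (fun k => Cminus (x n k) (wf k)) /\ nsq (fun k => Cminus (x n k) (wf k)) <= eps * eps).
  { intros eps He. destruct (Hc eps He) as [N HN]. exists N. intros n Hn.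
    apply ser_bnd. apply sqsum_ge0. intros K.
    assert (Hl : is_lim_seq (fun m => sum_n (sqsum (fun k => Cminus (x n k) (x m k))) K) (sum_n (sqsum (fun k => Cminus (x n k) (wf k))) K)).
    { apply lim_sum_n. intros j.
      apply (is_lim_seq_ext (fun m => (fst (x n j) - fst (x m j)) * (fst (x n j) - fst (x m j)) + (snd (x n j) - snd (x m j)) * (snd (x n j) - snd (x m j)))).
      intros m; rewrite sqsum_eq; cunf; ring.
      replace (sqsum (fun k => Cminus (x n k) (wf k)) j) with ((fst (x n j) - fst (wf j)) * (fst (x n j) - fst (wf j)) + (snd (x n j) - snd (wf j)) * (snd (x n j) - snd (wf j))) by (rewrite sqsum_eq; cunf; ring).
      apply is_lim_seq_plus'; apply is_lim_seq_mult'; apply is_lim_seq_minus'; auto using is_lim_seq_const. }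
    assert (Rbar_le (sum_n (sqsum (fun k => Cminus (x n k) (wf k))) K) (eps * eps)).
    { apply (is_lim_seq_le_loc (fun m => sum_n (sqsum (fun k => Cminus (x n k) (x m k))) K) (fun _ => eps * eps)); auto.
      exists N. intros m Hm. specialize (HN n m Hn Hm).
      eapply Rle_trans. apply ser_psum_le. apply sqsum_ge0. apply isl2_sub; auto.
      fold (nsq (fun k => Cminus (x n k) (x m k))). rewrite <- vnorm_sq by (apply isl2_sub; auto).
      assert (H0 := vnorm_ge0 (fun k => Cminus (x n k) (x m k))). simpl. nra.
      apply is_lim_seq_const. }
    exact H. }
  destruct (Key 1 Rlt_0_1) as [N0 HN0]. destruct (HN0 N0 (le_n _)) as [Hi _].
  assert (Hw : isl2 wf).
  { apply (isl2_ext (fun k => Cminus (x N0 k) (Cminus (x N0 k) (wf k)))). intros k; ceq. apply isl2_sub; auto. }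
  exists (L2 wf Hw). intros eps He. destruct (Key eps He) as [N HN]. exists N. intros n Hn.
  destruct (HN n Hn) as [H1 H2]. simpl. unfold vnorm. fold (nsq (fun k => Cminus (x n k) (wf k))).
  rewrite <- (sqrt_square eps) by lra. apply sqrt_le_1_alt. auto.
Qed.

Lemma EXT (e : nat -> l2) (He : is_ONB e) (x y : l2) :
  (forall k, inner x (e k) = inner y (e k)) -> PE x y.
Proof.
  intros H j. destruct He as [_ Hc].
  assert (Hz := Hc (l2sub x y)). simpl in Hz.
  assert (Z : Cminus (x j) (y j) = RtoC 0).
  { apply Hz. intros k. rewrite inner_sub by auto. rewrite H. ceq. }
  apply (f_equal (fun z => Cplus z (y j))) in Z. revert Z. cunf. intros Z.
  destruct (x j), (y j). simpl in *. injection Z; intros; f_equal; lra.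
Qed.

Lemma DET (e : nat -> l2) (He : is_ONB e) (A B : op) :
  (forall m, PE (A (e m)) (B (e m))) -> forall u, PE (A u) (B u).
Proof.
  intros H u. apply (EXT e He). intros k.
  assert (Hw : PE (adj A (e k)) (adj B (e k))).
  { apply (EXT e He). intros j.
    rewrite (inner_conj (e j)), (inner_conj (e j) (adj B (e k))).
    rewrite <- (adj_is_adjoint A), <- (adj_is_adjoint B). f_equal. apply inner_ext; auto. intros i; auto. }
  rewrite (adj_is_adjoint A), (adj_is_adjoint B). apply inner_ext; auto. intros i; auto.
Qed.
Definition strict (phi : nat -> nat) := forall n, (phi n < phi (S n))%nat.
Definition conv (y : nat -> l2) (w : l2) := forall eps, 0 < eps -> exists N, forall n, (N <= n)%nat ->
  vnorm (fun k => Cminus (y n k) (w k)) <= eps.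

Lemma compact_iff (K : op) : compact_op K <-> forall (u : nat -> l2) M, (forall n, vnorm (u n) <= M) ->
  exists phi w, strict phi /\ conv (fun n => K (u (phi n))) w.
Proof. reflexivity. Qed.

Lemma strict_ge phi : strict phi -> forall n, (n <= phi n)%nat.
Proof. intros H n; induction n. lia. specialize (H n). lia. Qed.

Lemma strict_mono phi : strict phi -> forall n m, (n <= m)%nat -> (phi n <= phi m)%nat.
Proof. intros H n m Hnm; induction Hnm. lia. specialize (H m). lia. Qed.

Lemma strict_lt phi : strict phi -> forall n m, (n < m)%nat -> (phi n < phi m)%nat.
Proof. intros H n m Hnm. assert (H1 := strict_mono phi H (S n) m Hnm). specialize (H n). lia. Qed.

Lemma strict_comp phi psi : strict phi -> strict psi -> strict (fun n => phi (psi n)).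
Proof. intros H1 H2 n. apply strict_lt; auto. Qed.

Lemma conv_sub y w psi : conv y w -> strict psi -> conv (fun n => y (psi n)) w.
Proof.
  intros H Hp eps He. destruct (H eps He) as [N HN]. exists N. intros n Hn. apply HN.
  assert (H1 := strict_ge psi Hp n). lia.
Qed.

Lemma vnorm_sub_tri (a b c : nat -> C) : isl2 a -> isl2 b -> isl2 c ->
  vnorm (fun k => Cminus (a k) (c k)) <= vnorm (fun k => Cminus (a k) (b k)) + vnorm (fun k => Cminus (b k) (c k)).
Proof.
  intros Ha Hb Hc. rewrite (vnorm_ext (fun k => Cminus (a k) (c k)) (fun k => Cplus (Cminus (a k) (b k)) (Cminus (b k) (c k)))).
  apply vnorm_tri; apply isl2_sub; auto. intros k; ceq.
Qed.

Lemma vnorm_sub_sym (a b : nat -> C) : isl2 a -> isl2 b ->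
  vnorm (fun k => Cminus (a k) (b k)) = vnorm (fun k => Cminus (b k) (a k)).
Proof.
  intros. rewrite (vnorm_ext (fun k => Cminus (a k) (b k)) (fun k => Cmult (RtoC (-1)) (Cminus (b k) (a k)))).
  rewrite vnorm_scal. rewrite Cmod_R. rewrite Rabs_left by lra. ring.
  apply isl2_sub; auto. intros k; ceq.
Qed.

Lemma compact_ext (K K' : op) : compact_op K -> (forall u, PE (K' u) (K u)) -> compact_op K'.
Proof.
  intros H HE u M HM. destruct (H u M HM) as [phi [w [H1 H2]]]. exists phi, w. split; auto.
  intros eps He. destruct (H2 eps He) as [N HN]. exists N. intros n Hn.
  rewrite (vnorm_ext _ (fun k => Cminus (K (u (phi n)) k) (w k))). auto. intros k; rewrite HE; auto.
Qed.

Lemma compact_zero : compact_op opz.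
Proof.
  intros u M HM. exists (fun n => n), l2z. split. intros n; lia.
  intros eps He. exists O. intros n Hn. simpl.
  rewrite (vnorm_ext _ (fun _ => RtoC 0)). rewrite vnorm_zero. lra. intros k; ceq.
Qed.

Lemma compact_add (K1 K2 : op) : compact_op K1 -> compact_op K2 -> compact_op (opadd K1 K2).
Proof.
  intros H1 H2 u M HM. destruct (H1 u M HM) as [phi1 [w1 [Hp1 Hc1]]].
  destruct (H2 (fun n => u (phi1 n)) M (fun n => HM (phi1 n))) as [phi2 [w2 [Hp2 Hc2]]].
  exists (fun n => phi1 (phi2 n)), (l2add w1 w2). split. apply strict_comp; auto.
  intros eps He. destruct (conv_sub _ _ phi2 Hc1 Hp2 (eps/2)) as [N1 HN1]. lra.
  destruct (Hc2 (eps/2)) as [N2 HN2]. lra.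
  exists (max N1 N2). intros n Hn. simpl.
  rewrite (vnorm_ext _ (fun k => Cplus (Cminus (K1 (u (phi1 (phi2 n))) k) (w1 k)) (Cminus (K2 (u (phi1 (phi2 n))) k) (w2 k)))).
  eapply Rle_trans. apply vnorm_tri; apply isl2_sub; auto.
  specialize (HN1 n ltac:(lia)). specialize (HN2 n ltac:(lia)). simpl in HN1. lra.
  intros k; ceq.
Qed.

Lemma compact_scal c (K : op) : compact_op K -> compact_op (opscal c K).
Proof.
  intros H u M HM. destruct (H u M HM) as [phi [w [Hp Hc]]].
  exists phi, (l2scal c w). split; auto.
  intros eps He. destruct (Hc (eps / (Cmod c + 1))) as [N HN].
  apply Rdiv_lt_0_compat; auto. assert (H0 := Cmod_ge0' c). lra.
  exists N. intros n Hn. simpl.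
  rewrite (vnorm_ext _ (fun k => Cmult c (Cminus (K (u (phi n)) k) (w k)))).
  rewrite vnorm_scal by (apply isl2_sub; auto). specialize (HN n Hn).
  assert (H0 := Cmod_ge0' c).
  assert (H1 : Cmod c * (eps / (Cmod c + 1)) <= eps).
  { replace (Cmod c * (eps / (Cmod c + 1))) with (eps * (Cmod c / (Cmod c + 1))) by (field; lra).
    assert (Cmod c / (Cmod c + 1) <= 1).
    { unfold Rdiv. apply (Rmult_le_reg_r (Cmod c + 1)). lra. rewrite Rmult_assoc, Rinv_l, Rmult_1_l, Rmult_1_r by lra. lra. }
    nra. }
  eapply Rle_trans; [|apply H1]. apply Rmult_le_compat_l; auto.
  intros k; ceq.
Qed.
Lemma eps_scale M eps : 0 <= M -> 0 < eps -> M * (eps / (M + 1)) <= eps /\ 0 < eps / (M + 1).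
Proof.
  intros HM He. split.
  - replace (M * (eps / (M + 1))) with (eps * (M / (M + 1))) by (field; lra).
    assert (M / (M + 1) <= 1).
    { unfold Rdiv. apply (Rmult_le_reg_r (M + 1)). lra. rewrite Rmult_assoc, Rinv_l, Rmult_1_l, Rmult_1_r by lra. lra. }
    nra.
  - apply Rdiv_lt_0_compat; lra.
Qed.

Lemma conv_op (B : op) y w : conv y w -> conv (fun n => B (y n)) (B w).
Proof.
  intros H eps He. destruct (op_bound B) as [M [HM0 HM]].
  destruct (eps_scale M eps HM0 He) as [E1 E2].
  destruct (H _ E2) as [N HN]. exists N. intros n Hn.
  eapply Rle_trans. apply (op_diff B M HM). eapply Rle_trans; [|apply E1].
  apply Rmult_le_compat_l; auto.
Qed.

Lemma compact_comp_l (B K : op) : compact_op K -> compact_op (opcomp B K).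
Proof.
  intros H u M HM. destruct (H u M HM) as [phi [w [Hp Hc]]].
  exists phi, (B w). split; auto. apply (conv_op B (fun n => K (u (phi n))) w Hc).
Qed.

Lemma compact_comp_r (K B : op) : compact_op K -> compact_op (opcomp K B).
Proof.
  intros H u M HM. destruct (op_bound B) as [MB [HB0 HB]].
  destruct (H (fun n => B (u n)) (MB * M)) as [phi [w [Hp Hc]]].
  intros n. eapply Rle_trans. apply HB. apply Rmult_le_compat_l; auto.
  exists phi, w. split; auto.
Qed.

Lemma compact_adj (K : op) : compact_op K -> compact_op (adj K).
Proof.
  intros H u M HM. set (W := adj K).
  destruct (compact_comp_r K W H u M HM) as [phi [z [Hp Hc]]].
  assert (HM0 : 0 <= M) by (eapply Rle_trans; [apply vnorm_ge0|apply (HM O)]).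
  assert (Hcau : ccauchy (fun n => W (u (phi n)))).
  { intros eps He.
    destruct (Hc (eps * eps / (4 * (M + 1)))) as [N HN].
    apply Rdiv_lt_0_compat; nra.
    exists N. intros a b Ha Hb.
    set (x := l2sub (u (phi a)) (u (phi b))).
    assert (E1 : PE (W x) (fun k => Cminus (W (u (phi a)) k) (W (u (phi b)) k))) by (apply op_sub; intros k; reflexivity).
    assert (E2 : PE (K (W x)) (fun k => Cminus (K (W (u (phi a))) k) (K (W (u (phi b))) k))) by
      (apply op_sub; intros k; apply E1).
    assert (Hx : vnorm x <= 2 * M).
    { unfold x. simpl. rewrite (vnorm_ext _ (fun k => Cplus (u (phi a) k) (Cmult (RtoC (-1)) (u (phi b) k)))).
      eapply Rle_trans. apply vnorm_tri; auto. apply isl2_scal; auto. rewrite vnorm_scal by auto.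
      rewrite Cmod_R, Rabs_left by lra. assert (HMa := HM (phi a)); assert (HMb := HM (phi b)). lra. intros k; ceq. }
    assert (Hk : vnorm (K (W x)) <= eps * eps / (4 * (M + 1)) + eps * eps / (4 * (M + 1))).
    { rewrite (vnorm_ext _ _ E2).
      eapply Rle_trans. apply (vnorm_sub_tri _ z); auto.
      rewrite (vnorm_sub_sym z) by auto. apply Rplus_le_compat; [apply HN|apply HN]; lia. }
    assert (Hn : nsq (W x) <= vnorm (K (W x)) * vnorm x).
    { rewrite <- (Rabs_pos_eq (nsq (W x))) by (apply nsq_ge0; auto).
      replace (nsq (W x)) with (fst (inner (K (W x)) x)).
      apply cs_re; auto.
      rewrite (adj_is_adjoint K (W x) x). fold W. rewrite inner_self by auto. reflexivity. }
    assert (nsq (W x) <= eps * eps).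
    { eapply Rle_trans. apply Hn. 
      assert (H0 := vnorm_ge0 (K (W x))). assert (H1 := vnorm_ge0 x).
      assert (Hq : (eps * eps / (4 * (M + 1)) + eps * eps / (4 * (M + 1))) * (2 * M) <= eps * eps).
      { replace ((eps * eps / (4 * (M + 1)) + eps * eps / (4 * (M + 1))) * (2 * M)) with (eps * eps * (M / (M + 1))) by (field; lra).
        destruct (eps_scale M 1 HM0 Rlt_0_1) as [Q _]. 
        assert (M / (M + 1) <= 1) by (unfold Rdiv in *; lra). nra. }
      eapply Rle_trans; [|apply Hq]. apply Rmult_le_compat; auto. }
    rewrite <- (vnorm_ext _ _ E1). unfold vnorm. fold (nsq (W x)).
    rewrite <- (sqrt_square eps) by lra. apply sqrt_le_1_alt. auto. }
  destruct (l2_complete _ Hcau) as [w Hw]. exists phi, w. split; auto.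
Qed.
Definition selp (Kn : nat -> op) (m : nat) (v : nat -> l2) : nat -> nat :=
  epsilon (inhabits (fun n : nat => n)) (fun phi => strict phi /\ exists w : l2, conv (fun n => Kn m (v (phi n))) w).

Fixpoint psi (Kn : nat -> op) (u : nat -> l2) (m : nat) : nat -> nat :=
  match m with
  | O => selp Kn O u
  | S m' => fun n => psi Kn u m' (selp Kn (S m') (fun k => u (psi Kn u m' k)) n)
  end.

Lemma selp_spec (Kn : nat -> op) m (v : nat -> l2) M : compact_op (Kn m) -> (forall n, vnorm (v n) <= M) ->
  strict (selp Kn m v) /\ exists w, conv (fun n => Kn m (v (selp Kn m v n))) w.
Proof.
  intros H HM. unfold selp. apply (epsilon_spec (inhabits (fun n : nat => n))
    (fun phi => strict phi /\ exists w : l2, conv (fun n => Kn m (v (phi n))) w)).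
  destruct (H v M HM) as [phi [w [H1 H2]]]. exists phi. split; eauto.
Qed.

Lemma psi_spec (Kn : nat -> op) (u : nat -> l2) M : (forall m, compact_op (Kn m)) -> (forall n, vnorm (u n) <= M) ->
  forall m, strict (psi Kn u m) /\ exists w, conv (fun n => Kn m (u (psi Kn u m n))) w.
Proof.
  intros HK HM m. induction m; simpl.
  - apply selp_spec with M; auto.
  - destruct IHm as [Hs _].
    destruct (selp_spec Kn (S m) (fun k => u (psi Kn u m k)) M (HK _) (fun n => HM _)) as [Hs2 Hc].
    split. apply strict_comp; auto. exact Hc.
Qed.

Lemma psi_shift (Kn : nat -> op) (u : nat -> l2) M : (forall m, compact_op (Kn m)) -> (forall n, vnorm (u n) <= M) ->
  forall j m n, exists k, (n <= k)%nat /\ psi Kn u (j + m) n = psi Kn u m k.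
Proof.
  intros HK HM j. induction j; intros m n. exists n; split; auto.
  simpl.
  destruct (selp_spec Kn (S (j + m)) (fun k => u (psi Kn u (j + m) k)) M (HK _) (fun n => HM _)) as [Hs _].
  destruct (IHj m (selp Kn (S (j + m)) (fun k => u (psi Kn u (j + m) k)) n)) as [k [Hk E]].
  exists k. split. assert (H := strict_ge _ Hs n). lia. exact E.
Qed.

Lemma compact_limit (Kn : nat -> op) (K : op) : (forall m, compact_op (Kn m)) -> op_norm_cvg Kn K -> compact_op K.
Proof.
  intros HK Hcv u M HM.
  assert (HM0 : 0 <= M) by (eapply Rle_trans; [apply vnorm_ge0|apply (HM O)]).
  assert (Hd : strict (fun n => psi Kn u n n)).
  { intros n. simpl.
    destruct (selp_spec Kn (S n) (fun k => u (psi Kn u n k)) M (HK _) (fun n => HM _)) as [Hs _].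
    destruct (psi_spec Kn u M HK HM n) as [Hp _].
    apply strict_lt; auto. assert (H := strict_ge _ Hs (S n)). lia. }
  assert (Hcau : ccauchy (fun n => K (u (psi Kn u n n)))).
  { intros eps He.
    set (e1 := eps / 4).
    assert (He1 : 0 < e1) by (unfold e1; lra).
    destruct (eps_scale M e1 HM0 He1) as [S1 S2].
    destruct (Hcv _ S2) as [m Hm].
    assert (Hmv : forall v : nat -> l2, (forall n, vnorm (v n) <= M) -> forall n, vnorm (fun k => Cminus (Kn m (v n) k) (K (v n) k)) <= e1).
    { intros v Hv n. eapply Rle_trans. apply Hm. lia. eapply Rle_trans; [|apply S1].
      rewrite Rmult_comm. apply Rmult_le_compat_r. lra. auto. }
    destruct (psi_spec Kn u M HK HM m) as [_ [w Hw]].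
    destruct (Hw e1 He1) as [N1 HN1].
    exists (max m N1). intros a b Ha Hb.
    destruct (psi_shift Kn u M HK HM (a - m) m a) as [ka [Hka Ea]].
    replace (a - m + m)%nat with a in Ea by lia.
    destruct (psi_shift Kn u M HK HM (b - m) m b) as [kb [Hkb Eb]].
    replace (b - m + m)%nat with b in Eb by lia.
    rewrite Ea, Eb.
    set (xa := u (psi Kn u m ka)). set (xb := u (psi Kn u m kb)).
    assert (A1 : vnorm (fun k => Cminus (K xa k) (Kn m xa k)) <= e1).
    { rewrite vnorm_sub_sym by auto. apply (Hmv (fun n => u (psi Kn u m n))). intros; apply HM. }
    assert (A2 : vnorm (fun k => Cminus (Kn m xa k) (w k)) <= e1) by (apply HN1; lia).
    assert (A3 : vnorm (fun k => Cminus (w k) (Kn m xb k)) <= e1) by (rewrite vnorm_sub_sym by auto; apply HN1; lia).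
    assert (A4 : vnorm (fun k => Cminus (Kn m xb k) (K xb k)) <= e1).
    { apply (Hmv (fun n => u (psi Kn u m n))). intros; apply HM. }
    assert (T1 := vnorm_sub_tri (K xa) (Kn m xa) (K xb) (lv_sq _) (lv_sq _) (lv_sq _)).
    assert (T2 := vnorm_sub_tri (Kn m xa) w (K xb) (lv_sq _) (lv_sq _) (lv_sq _)).
    assert (T3 := vnorm_sub_tri w (Kn m xb) (K xb) (lv_sq _) (lv_sq _) (lv_sq _)).
    unfold e1 in *. lra. }
  destruct (l2_complete _ Hcau) as [w Hw]. exists (fun n => psi Kn u n n), w. split; auto.
Qed.
Definition dl (i j : nat) : C := if Nat.eqb i j then RtoC 1 else RtoC 0.

Lemma inner_l2lin_l a (u : l2) b (v : l2) w : isl2 w ->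
  inner (l2lin a u b v) w = Cplus (Cmult a (inner u w)) (Cmult b (inner v w)).
Proof. intros. simpl. apply inner_lin1; auto. Qed.

Lemma inner_l2lin_r a (u : l2) b (v : l2) w : isl2 w ->
  inner w (l2lin a u b v) = Cplus (Cmult (Cconj a) (inner w u)) (Cmult (Cconj b) (inner w v)).
Proof. intros. simpl. apply inner_lin2; auto. Qed.

Lemma Cconj_R r : Cconj (RtoC r) = RtoC r.
Proof. ceq. Qed.

Lemma two_n_cases (i n : nat) : (i = (2 * n)%nat \/ i = (2 * n + 1)%nat) \/ (i <> (2 * n)%nat /\ i <> (2 * n + 1)%nat).
Proof. lia. Qed.

Lemma blk_cases k : exists n, k = (2 * n)%nat \/ k = (2 * n + 1)%nat.
Proof. exists (Nat.div2 k). destruct (Nat.Even_or_Odd k) as [[m Hm]|[m Hm]]; subst.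
  left. rewrite Nat.div2_double. auto. right. replace ((2 * m + 1)%nat) with (S (2 * m))%nat by lia. rewrite Nat.div2_succ_double. lia. Qed.

Lemma even_2n n : Nat.even ((2 * n)%nat) = true.
Proof. induction n. auto. replace ((2 * S n)%nat) with (S (S (2 * n)))%nat by lia. simpl. auto. Qed.
Lemma even_2n1 n : Nat.even ((2 * n + 1)%nat) = false.
Proof. induction n. auto. replace ((2 * S n + 1)%nat) with (S (S (2 * n + 1)))%nat by lia. simpl. auto. Qed.
Lemma div2_2n1 n : Nat.div2 ((2 * n + 1)%nat) = n.
Proof. replace ((2 * n + 1)%nat) with (S (2 * n))%nat by lia. apply Nat.div2_succ_double. Qed.

Section Blocks.
Variable e : nat -> l2.
Hypothesis He : is_ONB e.
Variable alpha : R.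
Hypothesis Ha : 0 < alpha <= 1.
Variable X : nat -> Prop.

Definition sa := sqrt (1 - alpha ^ 2).
Lemma sa_sq : alpha * alpha + sa * sa = 1.
Proof. unfold sa. rewrite sqrt_sqrt. ring. assert (alpha ^ 2 <= 1) by nra. lra. Qed.

Definition fE n := l2lin (RtoC alpha) (e ((2 * n)%nat)) (RtoC sa) (e ((2 * n + 1)%nat)).
Definition fO n := l2lin (RtoC sa) (e ((2 * n)%nat)) (RtoC (- alpha)) (e ((2 * n + 1)%nat)).

Lemma ee i j : inner (e i) (e j) = dl i j.
Proof. destruct He as [H _]. rewrite H. unfold dl. auto. Qed.

Ltac dls := unfold dl; repeat match goal with |- context [Nat.eqb ?a ?b] => destruct (Nat.eqb_spec a b); try lia end.

Lemma fE_e n j : inner (fE n) (e j) = Cplus (Cmult (RtoC alpha) (dl ((2*n)%nat) j)) (Cmult (RtoC sa) (dl ((2*n+1)%nat) j)).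
Proof. unfold fE. rewrite inner_l2lin_l, !ee by auto. auto. Qed.
Lemma fO_e n j : inner (fO n) (e j) = Cplus (Cmult (RtoC sa) (dl ((2*n)%nat) j)) (Cmult (RtoC (-alpha)) (dl ((2*n+1)%nat) j)).
Proof. unfold fO. rewrite inner_l2lin_l, !ee by auto. auto. Qed.

Lemma f_out n j : j <> (2 * n)%nat -> j <> (2 * n + 1)%nat -> inner (fE n) (e j) = RtoC 0 /\ inner (fO n) (e j) = RtoC 0.
Proof. intros. rewrite fE_e, fO_e. dls. split; ceq. Qed.

Lemma fEfE n m : inner (fE n) (fE m) = dl n m.
Proof.
  unfold fE at 2. rewrite inner_l2lin_r, !fE_e, !Cconj_R by auto.
  assert (H := sa_sq). dls; apply injective_projections; cunf; nra.
Qed.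
Lemma fOfO n m : inner (fO n) (fO m) = dl n m.
Proof.
  unfold fO at 2. rewrite inner_l2lin_r, !fO_e, !Cconj_R by auto.
  assert (H := sa_sq). dls; apply injective_projections; cunf; nra.
Qed.
Lemma fEfO n m : inner (fE n) (fO m) = RtoC 0.
Proof.
  unfold fO. rewrite inner_l2lin_r, !fE_e, !Cconj_R by auto.
  dls; apply injective_projections; cunf; nra.
Qed.
Lemma fOfE n m : inner (fO n) (fE m) = RtoC 0.
Proof. rewrite inner_conj, fEfO. ceq. Qed.

Lemma e_even n : PE (e ((2 * n)%nat)) (fun k => Cplus (Cmult (RtoC alpha) (fE n k)) (Cmult (RtoC sa) (fO n k))).
Proof.
  intros k. unfold fE, fO, l2lin; cbn [lv]. assert (H := sa_sq). destruct (e ((2 * n)%nat) k) as [x y], (e ((2 * n + 1)%nat) k).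
  apply injective_projections; cunf.
  rewrite <- (Rmult_1_l x) at 1; rewrite <- H; ring. rewrite <- (Rmult_1_l y) at 1; rewrite <- H; ring.
Qed.
Lemma e_odd n : PE (e ((2 * n + 1)%nat)) (fun k => Cplus (Cmult (RtoC sa) (fE n k)) (Cmult (RtoC (- alpha)) (fO n k))).
Proof.
  intros k. unfold fE, fO, l2lin; cbn [lv]. assert (H := sa_sq). destruct (e ((2 * n)%nat) k), (e ((2 * n + 1)%nat) k) as [x y].
  apply injective_projections; cunf.
  rewrite <- (Rmult_1_l x) at 1; rewrite <- H; ring. rewrite <- (Rmult_1_l y) at 1; rewrite <- H; ring.
Qed.

Lemma span_block (x : l2) n : (forall j, j <> (2 * n)%nat -> j <> (2 * n + 1)%nat -> inner x (e j) = RtoC 0) ->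
  PE x (fun k => Cplus (Cmult (inner x (fE n)) (fE n k)) (Cmult (inner x (fO n)) (fO n k))).
Proof.
  intros H. apply (EXT e He x (l2lin (inner x (fE n)) (fE n) (inner x (fO n)) (fO n))).
  intros j. rewrite inner_l2lin_l by auto. rewrite fE_e, fO_e.
  destruct (two_n_cases j n) as [[->| ->]|[H1 H2]].
  - rewrite (inner_ext x x (e ((2 * n)%nat)) _ (fun k => eq_refl) (e_even n)).
    rewrite inner_lin2 by auto. rewrite !Cconj_R. dls. ceq.
  - rewrite (inner_ext x x (e ((2 * n + 1)%nat)) _ (fun k => eq_refl) (e_odd n)).
    rewrite inner_lin2 by auto. rewrite !Cconj_R. dls. ceq.
  - rewrite H by auto. dls. ceq.
Qed.

Definition BD (T : op) (p q r s : nat -> C) : Prop := forall n,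
  PE (T (fE n)) (fun k => Cplus (Cmult (p n) (fE n k)) (Cmult (q n) (fO n k))) /\
  PE (T (fO n)) (fun k => Cplus (Cmult (r n) (fE n k)) (Cmult (s n) (fO n k))) /\
  (~ X n -> p n = RtoC 0 /\ q n = RtoC 0 /\ r n = RtoC 0 /\ s n = RtoC 0).

Definition bv n (y : nat -> C) := exists a b, PE y (fun k => Cplus (Cmult a (fE n k)) (Cmult b (fO n k))).

Lemma bv_out n y j : bv n y -> j <> (2 * n)%nat -> j <> (2 * n + 1)%nat -> inner y (e j) = RtoC 0.
Proof.
  intros [a [b H]] H1 H2. rewrite (inner_ext y _ (e j) (e j) H (fun _ => eq_refl)).
  rewrite inner_lin1 by auto. destruct (f_out n j H1 H2) as [E1 E2]. rewrite E1, E2. ceq.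
Qed.

Lemma bv_coef n y a b : PE y (fun k => Cplus (Cmult a (fE n k)) (Cmult b (fO n k))) ->
  inner y (fE n) = a /\ inner y (fO n) = b.
Proof.
  intros H. rewrite !(inner_ext y _ _ _ H (fun _ => eq_refl)). rewrite !inner_lin1 by auto.
  rewrite fEfE, fOfO, fEfO, fOfE. unfold dl. rewrite Nat.eqb_refl. split; ceq.
Qed.

Lemma bv_orth n' n y : bv n' y -> n' <> n -> inner y (fE n) = RtoC 0 /\ inner y (fO n) = RtoC 0.
Proof.
  intros [a [b H]] Hn. rewrite !(inner_ext y _ _ _ H (fun _ => eq_refl)). rewrite !inner_lin1 by auto.
  rewrite fEfE, fOfO, fEfO, fOfE. unfold dl. destruct (Nat.eqb_spec n' n); [lia|]. split; ceq.
Qed.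

Lemma bv_lin n y1 y2 c1 c2 (z : nat -> C) : bv n y1 -> bv n y2 ->
  PE z (fun k => Cplus (Cmult c1 (y1 k)) (Cmult c2 (y2 k))) -> bv n z.
Proof.
  intros [a1 [b1 H1]] [a2 [b2 H2]] H. exists (Cplus (Cmult c1 a1) (Cmult c2 a2)), (Cplus (Cmult c1 b1) (Cmult c2 b2)).
  intros k. rewrite H, H1, H2. ceq.
Qed.

Lemma BD_T_e (T : op) p q r s : BD T p q r s -> forall k n, in_block k n -> bv n (T (e k)).
Proof.
  intros HB k n [-> | ->]; destruct (HB n) as [H1 [H2 _]].
  - apply (bv_lin n (T (fE n)) (T (fO n)) (RtoC alpha) (RtoC sa)).
    exists (p n), (q n); auto. exists (r n), (s n); auto.
    exact (op_lin T (RtoC alpha) (RtoC sa) (fE n) (fO n) _ (e_even n)).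
  - apply (bv_lin n (T (fE n)) (T (fO n)) (RtoC sa) (RtoC (-alpha))).
    exists (p n), (q n); auto. exists (r n), (s n); auto.
    exact (op_lin T (RtoC sa) (RtoC (-alpha)) (fE n) (fO n) _ (e_odd n)).
Qed.

Lemma BD_A0X (T : op) p q r s : BD T p q r s -> A0X e X T.
Proof.
  intros HB. split.
  - intros k m Hne. destruct (blk_cases k) as [n Hk]. exists n. split; [exact Hk|].
    destruct (two_n_cases m n) as [Hm|[H1 H2]]; [exact Hm|].
    exfalso; apply Hne. apply (bv_out n); auto. apply (BD_T_e T p q r s HB); auto.
  - intros n Hn k Hk j. destruct (HB n) as [H1 [H2 H3]]. destruct (H3 Hn) as [Z1 [Z2 [Z3 Z4]]].
    destruct Hk as [-> | ->].
    + rewrite (op_lin T (RtoC alpha) (RtoC sa) (fE n) (fO n) _ (e_even n)). rewrite H1, H2, Z1, Z2, Z3, Z4. ceq.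
    + rewrite (op_lin T (RtoC sa) (RtoC (-alpha)) (fE n) (fO n) _ (e_odd n)). rewrite H1, H2, Z1, Z2, Z3, Z4. ceq.
Qed.

Lemma A0X_out (T : op) : A0X e X T -> forall i j n, in_block i n -> j <> (2 * n)%nat -> j <> (2 * n + 1)%nat ->
  inner (T (e i)) (e j) = RtoC 0.
Proof.
  intros [HA _] i j n Hi H1 H2. destruct (classic (inner (T (e i)) (e j) = RtoC 0)) as [E|E]; auto.
  destruct (HA i j E) as [n' [Hi' Hj']]. unfold in_block in *. exfalso. lia.
Qed.

Definition cE (T : op) n := inner (T (fE n)) (fE n).
Definition cEO (T : op) n := inner (T (fE n)) (fO n).
Definition cOE (T : op) n := inner (T (fO n)) (fE n).
Definition cO (T : op) n := inner (T (fO n)) (fO n).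

Lemma A0X_BD (T : op) : A0X e X T -> BD T (cE T) (cEO T) (cOE T) (cO T).
Proof.
  intros HA n.
  assert (HfE : PE (T (fE n)) (fun k => Cplus (Cmult (RtoC alpha) (T (e (2 * n)%nat) k)) (Cmult (RtoC sa) (T (e (2 * n + 1)%nat) k)))).
  { exact (op_lin T (RtoC alpha) (RtoC sa) (e (2 * n)%nat) (e (2 * n + 1)%nat) (fE n) (fun k => eq_refl)). }
  assert (HfO : PE (T (fO n)) (fun k => Cplus (Cmult (RtoC sa) (T (e (2 * n)%nat) k)) (Cmult (RtoC (-alpha)) (T (e (2 * n + 1)%nat) k)))).
  { exact (op_lin T (RtoC sa) (RtoC (-alpha)) (e (2 * n)%nat) (e (2 * n + 1)%nat) (fO n) (fun k => eq_refl)). }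
  assert (Hout : forall (y : l2) a b, PE y (fun k => Cplus (Cmult a (T (e (2 * n)%nat) k)) (Cmult b (T (e (2 * n + 1)%nat) k))) ->
     forall j, j <> (2 * n)%nat -> j <> (2 * n + 1)%nat -> inner y (e j) = RtoC 0).
  { intros y a b Hy j H1 H2. rewrite (inner_ext y _ _ _ Hy (fun _ => eq_refl)). rewrite inner_lin1 by auto.
    rewrite (A0X_out T HA (2 * n)%nat j n), (A0X_out T HA (2 * n + 1)%nat j n); auto; try (unfold in_block; lia). ceq. }
  split; [|split].
  - apply span_block. apply (Hout _ _ _ HfE).
  - apply span_block. apply (Hout _ _ _ HfO).
  - intros Hn. destruct HA as [_ HZ].
    assert (Z1 : PE (T (fE n)) (fun _ => RtoC 0)).
    { intros k. rewrite HfE, (HZ n Hn (2 * n)%nat), (HZ n Hn (2 * n + 1)%nat); try (unfold in_block; lia). ceq. }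
    assert (Z2 : PE (T (fO n)) (fun _ => RtoC 0)).
    { intros k. rewrite HfO, (HZ n Hn (2 * n)%nat), (HZ n Hn (2 * n + 1)%nat); try (unfold in_block; lia). ceq. }
    unfold cE, cEO, cOE, cO.
    rewrite !(inner_ext (T (fE n)) _ _ _ Z1 (fun _ => eq_refl)), !(inner_ext (T (fO n)) _ _ _ Z2 (fun _ => eq_refl)).
    rewrite !inner_zero_l. auto.
Qed.

Lemma BD_coef (T : op) p q r s p' q' r' s' : BD T p q r s ->
  (forall n, p n = p' n /\ q n = q' n /\ r n = r' n /\ s n = s' n) -> BD T p' q' r' s'.
Proof.
  intros HB HE n. destruct (HB n) as [H1 [H2 H3]]. destruct (HE n) as [E1 [E2 [E3 E4]]].
  rewrite <- E1, <- E2, <- E3, <- E4. auto.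
Qed.

Lemma BD_ext (T T' : op) p q r s : BD T p q r s -> (forall u, PE (T' u) (T u)) -> BD T' p q r s.
Proof.
  intros HB HE n. destruct (HB n) as [H1 [H2 H3]]. split; [|split]; auto.
  intros k; rewrite HE; auto. intros k; rewrite HE; auto.
Qed.

Lemma BD_eq (T U : op) p q r s p' q' r' s' : BD T p q r s -> BD U p' q' r' s' ->
  (forall n, X n -> p n = p' n /\ q n = q' n /\ r n = r' n /\ s n = s' n) -> forall u, PE (T u) (U u).
Proof.
  intros HT HU HE. apply (DET e He). intros m. destruct (blk_cases m) as [n [-> | ->]];
  destruct (HT n) as [T1 [T2 T3]]; destruct (HU n) as [U1 [U2 U3]]; intros k.
  - rewrite (op_lin T (RtoC alpha) (RtoC sa) (fE n) (fO n) _ (e_even n)).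
    rewrite (op_lin U (RtoC alpha) (RtoC sa) (fE n) (fO n) _ (e_even n)).
    rewrite T1, T2, U1, U2. destruct (classic (X n)) as [Hx|Hx].
    + destruct (HE n Hx) as [E1 [E2 [E3 E4]]]. rewrite E1, E2, E3, E4. auto.
    + destruct (T3 Hx) as [Z1 [Z2 [Z3 Z4]]]. destruct (U3 Hx) as [W1 [W2 [W3 W4]]].
      rewrite Z1, Z2, Z3, Z4, W1, W2, W3, W4. auto.
  - rewrite (op_lin T (RtoC sa) (RtoC (-alpha)) (fE n) (fO n) _ (e_odd n)).
    rewrite (op_lin U (RtoC sa) (RtoC (-alpha)) (fE n) (fO n) _ (e_odd n)).
    rewrite T1, T2, U1, U2. destruct (classic (X n)) as [Hx|Hx].
    + destruct (HE n Hx) as [E1 [E2 [E3 E4]]]. rewrite E1, E2, E3, E4. auto.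
    + destruct (T3 Hx) as [Z1 [Z2 [Z3 Z4]]]. destruct (U3 Hx) as [W1 [W2 [W3 W4]]].
      rewrite Z1, Z2, Z3, Z4, W1, W2, W3, W4. auto.
Qed.

Lemma BD_comp (T U : op) p q r s p' q' r' s' : BD U p q r s -> BD T p' q' r' s' ->
  BD (opcomp T U) (fun n => Cplus (Cmult (p n) (p' n)) (Cmult (q n) (r' n)))
                  (fun n => Cplus (Cmult (p n) (q' n)) (Cmult (q n) (s' n)))
                  (fun n => Cplus (Cmult (r n) (p' n)) (Cmult (s n) (r' n)))
                  (fun n => Cplus (Cmult (r n) (q' n)) (Cmult (s n) (s' n))).
Proof.
  intros HU HT n. destruct (HU n) as [U1 [U2 U3]]. destruct (HT n) as [T1 [T2 T3]].
  split; [|split].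
  - intros k. simpl. rewrite (op_lin T (p n) (q n) (fE n) (fO n) _ U1). rewrite T1, T2. ceq.
  - intros k. simpl. rewrite (op_lin T (r n) (s n) (fE n) (fO n) _ U2). rewrite T1, T2. ceq.
  - intros Hx. destruct (U3 Hx) as [Z1 [Z2 [Z3 Z4]]]. rewrite Z1, Z2, Z3, Z4. repeat split; ceq.
Qed.

Lemma BD_add (S T : op) p q r s p' q' r' s' : BD S p q r s -> BD T p' q' r' s' ->
  BD (opadd S T) (fun n => Cplus (p n) (p' n)) (fun n => Cplus (q n) (q' n))
                 (fun n => Cplus (r n) (r' n)) (fun n => Cplus (s n) (s' n)).
Proof.
  intros HS HT n. destruct (HS n) as [S1 [S2 S3]]. destruct (HT n) as [T1 [T2 T3]].
  split; [|split].
  - intros k. simpl. rewrite S1, T1. ceq.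
  - intros k. simpl. rewrite S2, T2. ceq.
  - intros Hx. destruct (S3 Hx) as [Z1 [Z2 [Z3 Z4]]]. destruct (T3 Hx) as [W1 [W2 [W3 W4]]].
    rewrite Z1, Z2, Z3, Z4, W1, W2, W3, W4. repeat split; ceq.
Qed.

Lemma BD_scal c (T : op) p q r s : BD T p q r s ->
  BD (opscal c T) (fun n => Cmult c (p n)) (fun n => Cmult c (q n)) (fun n => Cmult c (r n)) (fun n => Cmult c (s n)).
Proof.
  intros HT n. destruct (HT n) as [T1 [T2 T3]].
  split; [|split].
  - intros k. simpl. rewrite T1. ceq.
  - intros k. simpl. rewrite T2. ceq.
  - intros Hx. destruct (T3 Hx) as [Z1 [Z2 [Z3 Z4]]]. rewrite Z1, Z2, Z3, Z4. repeat split; ceq.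
Qed.

Definition c0 : nat -> C := fun _ => RtoC 0.

Lemma BD_zero : BD opz c0 c0 c0 c0.
Proof. intros n. unfold c0. split; [|split]; try (intros k; simpl; ceq). auto. Qed.

Lemma BD_adj (T : op) p q r s : BD T p q r s ->
  BD (adj T) (fun n => Cconj (p n)) (fun n => Cconj (r n)) (fun n => Cconj (q n)) (fun n => Cconj (s n)).
Proof.
  intros HB n. destruct (HB n) as [H1 [H2 H3]].
  assert (Hout : forall (v : l2) j, j <> (2 * n)%nat -> j <> (2 * n + 1)%nat -> (v = fE n \/ v = fO n) ->
     inner (adj T v) (e j) = RtoC 0).
  { intros v j Hj1 Hj2 Hv. rewrite inner_conj. rewrite <- adj_is_adjoint.
    destruct (blk_cases j) as [n' Hn'].
    assert (n' <> n) by lia.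
    destruct (bv_orth n' n (T (e j)) (BD_T_e T p q r s HB j n' Hn') H) as [E1 E2].
    destruct Hv as [-> | ->]; [rewrite E1|rewrite E2]; ceq. }
  assert (Hc : forall (v w : l2), inner (adj T v) w = Cconj (inner (T w) v)).
  { intros v w. rewrite inner_conj. rewrite <- adj_is_adjoint. auto. }
  destruct (bv_coef n _ _ _ H1) as [A1 A2]. destruct (bv_coef n _ _ _ H2) as [B1 B2].
  split; [|split].
  - intros k. rewrite (span_block (adj T (fE n)) n (fun j H H' => Hout (fE n) j H H' (or_introl eq_refl))).
    rewrite !Hc, A1, B1. auto.
  - intros k. rewrite (span_block (adj T (fO n)) n (fun j H H' => Hout (fO n) j H H' (or_intror eq_refl))).
    rewrite !Hc, A2, B2. auto.
  - intros Hx. destruct (H3 Hx) as [Z1 [Z2 [Z3 Z4]]]. rewrite Z1, Z2, Z3, Z4. repeat split; ceq.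
Qed.

Lemma Dset_BD (T : op) : Dset e X alpha T -> BD T (cE T) c0 c0 (cO T).
Proof.
  intros [HA HD]. apply (BD_coef T (cE T) (cEO T) (cOE T) (cO T)). apply A0X_BD; auto.
  intros n. split; [auto|]. split; [|split; auto].
  - destruct (classic (X n)) as [Hx|Hx].
    + destruct (HD n Hx) as [D1 _]. destruct (D1 (fE n)) as [lam Hl]. intros j; reflexivity.
      unfold cEO, c0. rewrite (inner_ext _ (fun j => Cmult lam (fE n j)) _ _ Hl (fun _ => eq_refl)).
      rewrite inner_scal, fEfO by auto. ceq.
    + destruct (A0X_BD T HA n) as [_ [_ Z]]. apply Z; auto.
  - destruct (classic (X n)) as [Hx|Hx].
    + destruct (HD n Hx) as [_ D2]. destruct (D2 (fO n)) as [lam Hl]. intros j; unfold fO, l2lin, sa; cbn [lv]; ceq.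
      unfold cOE, c0. rewrite (inner_ext _ (fun j => Cmult lam (fO n j)) _ _ Hl (fun _ => eq_refl)).
      rewrite inner_scal, fOfE by auto. ceq.
    + destruct (A0X_BD T HA n) as [_ [_ Z]]. apply Z; auto.
Qed.

Lemma BD_Dset (T : op) p s : BD T p c0 c0 s -> Dset e X alpha T.
Proof.
  intros HB. split. apply (BD_A0X T p c0 c0 s HB).
  intros n Hx. destruct (HB n) as [H1 [H2 _]]. split.
  - intros w Hw. exists (p n). intros j.
    rewrite (op_ext T w (fE n)). rewrite H1, Hw. unfold c0, fE, fO, l2lin, sa; cbn [lv]. ceq. intros k. rewrite Hw. reflexivity.
  - intros w Hw. exists (s n). intros j.
    rewrite (op_ext T w (fO n)). rewrite H2, Hw. unfold c0, fE, fO, l2lin, sa; cbn [lv]. ceq. intros k. rewrite Hw. unfold fO, l2lin, sa; cbn [lv]. ceq.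
Qed.
Definition fb k : l2 := if Nat.even k then fE (Nat.div2 k) else fO (Nat.div2 k).

Lemma fb_2n n : fb (2 * n)%nat = fE n.
Proof. unfold fb. rewrite even_2n, Nat.div2_double. auto. Qed.
Lemma fb_2n1 n : fb (2 * n + 1)%nat = fO n.
Proof. unfold fb. rewrite even_2n1, div2_2n1. auto. Qed.

Lemma dl_2 n m : dl (2 * n)%nat (2 * m)%nat = dl n m.
Proof. unfold dl. destruct (Nat.eqb_spec (2*n) (2*m)), (Nat.eqb_spec n m); auto; lia. Qed.
Lemma dl_21 n m : dl (2 * n + 1)%nat (2 * m + 1)%nat = dl n m.
Proof. unfold dl. destruct (Nat.eqb_spec (2*n+1) (2*m+1)), (Nat.eqb_spec n m); auto; lia. Qed.
Lemma dl_2x n m : dl (2 * n)%nat (2 * m + 1)%nat = RtoC 0.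
Proof. unfold dl. destruct (Nat.eqb_spec (2*n) (2*m+1)); auto; lia. Qed.
Lemma dl_2y n m : dl (2 * n + 1)%nat (2 * m)%nat = RtoC 0.
Proof. unfold dl. destruct (Nat.eqb_spec (2*n+1) (2*m)); auto; lia. Qed.

Lemma fbfb k j : inner (fb k) (fb j) = dl k j.
Proof.
  destruct (blk_cases k) as [n [-> | ->]]; destruct (blk_cases j) as [m [-> | ->]];
  rewrite ?fb_2n, ?fb_2n1, ?dl_2, ?dl_21, ?dl_2x, ?dl_2y.
  apply fEfE. apply fEfO. apply fOfE. apply fOfO.
Qed.

Lemma csum_dl (c : nat -> C) m N : csum (fun k => Cmult (c k) (dl k m)) N = if Nat.leb m N then c m else RtoC 0.
Proof.
  induction N; simpl.
  - unfold dl. destruct m; simpl; ceq.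
  - rewrite IHN. unfold dl. destruct (Nat.leb_spec m N), (Nat.eqb_spec (S N) m), (Nat.leb_spec m (S N)); try lia; subst; ceq.
Qed.

Lemma csum_ext_le f g N : (forall k, (k <= N)%nat -> f k = g k) -> csum f N = csum g N.
Proof. intros H. induction N; simpl. apply H; lia. rewrite IHN, H; auto. Qed.

Lemma sq_bound S a : 0 <= S -> 0 <= a -> S <= a * sqrt S -> S <= a * a.
Proof.
  intros HS Ha0 H. assert (Hs : sqrt S * sqrt S = S) by (apply sqrt_sqrt; auto).
  assert (H4 : sqrt S <= a).
  { destruct (Req_dec (sqrt S) 0) as [Z|Z]. rewrite Z; auto.
    assert (0 < sqrt S) by (assert (H5 := sqrt_pos S); lra).
    apply (Rmult_le_reg_r (sqrt S)); auto. nra. }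
  rewrite <- Hs. assert (0 <= sqrt S) by apply sqrt_pos. nra.
Qed.

Lemma bessel (u : l2) N : sum_n (sqsum (fun k => inner u (fb k))) N <= nsq u.
Proof.
  set (c := fun k => inner u (fb k)).
  set (x := fun j => csum (fun k => Cmult (c k) (fb k j)) N).
  assert (Hx : isl2 x) by (apply isl2_csum; auto).
  set (S := sum_n (sqsum c) N).
  assert (HS0 : 0 <= S). { unfold S. eapply Rle_trans; [|apply (sum_n_mono _ (sqsum_ge0 c) 0 N); lia]. rewrite sum_O. apply sqsum_ge0. }
  assert (Hxf : forall m, (m <= N)%nat -> inner x (fb m) = c m).
  { intros m Hm. unfold x. rewrite inner_csum by auto.
    rewrite (csum_ext _ (fun k => Cmult (c k) (dl k m))). rewrite csum_dl.
    destruct (Nat.leb_spec m N); auto; lia. intros k; rewrite fbfb; auto. }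
  assert (E1 : fst (inner u x) = S).
  { rewrite inner_conj. unfold x. rewrite inner_csum by auto.
    assert (Hf : forall z, fst (Cconj z) = fst z) by reflexivity. rewrite Hf.
    rewrite csum_fst. unfold S. apply sum_n_ext. intros k. rewrite (inner_conj u (fun j => fb k j)). change (inner u (fun j => fb k j)) with (c k).
    unfold sqsum. rewrite Cmod2. cunf. ring. }
  assert (E2 : nsq x = S).
  { assert (H := inner_self x Hx). apply (f_equal fst) in H. unfold RtoC in H. cbn [fst] in H. rewrite <- H.
    unfold x at 1. rewrite inner_csum by auto.
    rewrite (csum_ext_le _ (fun k => Cmult (c k) (Cconj (c k)))).
    rewrite csum_fst. unfold S. apply sum_n_ext. intros k. unfold sqsum. rewrite Cmod2. cunf. ring.
    intros k Hk. rewrite (inner_conj x (fun j => fb k j)). change (inner x (fun j => fb k j)) with (inner x (fb k)). rewrite Hxf; auto. }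
  assert (H1 := cs_re u x (lv_sq u) Hx). rewrite E1 in H1.
  unfold vnorm at 2 in H1. fold (nsq x) in H1. rewrite E2 in H1.
  assert (S <= vnorm u * vnorm u).
  { apply sq_bound; auto. apply vnorm_ge0. eapply Rle_trans; [apply Rle_abs|exact H1]. }
  rewrite <- (vnorm_sq u) by auto. simpl. lra.
Qed.

Lemma isl2_ana (u : l2) : isl2 (fun k => inner u (fb k)).
Proof. apply (ser_bnd _ (nsq u)). apply sqsum_ge0. apply bessel. Qed.

Definition ana_f (u : l2) : l2 := L2 (fun k => inner u (fb k)) (isl2_ana u).
Lemma ana_lin : forall (c d : C) (u v w : l2),
  (forall k, lv w k = Cplus (Cmult c (lv u k)) (Cmult d (lv v k))) ->
  forall k, lv (ana_f w) k = Cplus (Cmult c (lv (ana_f u) k)) (Cmult d (lv (ana_f v) k)).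
Proof.
  intros c d u v w H k. unfold ana_f. cbn [lv].
  rewrite (inner_ext w _ (fb k) (fb k) H (fun _ => eq_refl)). apply inner_lin1; auto.
Qed.
Lemma ana_bdd : exists M : R, forall u : l2, vnorm (ana_f u) <= M * vnorm u.
Proof.
  exists 1. intros u. rewrite Rmult_1_l. unfold vnorm. apply sqrt_le_1_alt.
  destruct (ser_bnd _ (nsq u) (sqsum_ge0 _) (bessel u)) as [_ H]. exact H.
Qed.
Definition Ana : op := Op ana_f ana_lin ana_bdd.

Lemma isl2_dm (d : nat -> R) (Hd : forall k, 0 <= d k <= 1) (u : l2) : isl2 (fun k => Cmult (RtoC (d k)) (u k)).
Proof.
  apply (exs_le _ (sqsum u)); auto. intros k. rewrite Rabs_pos_eq by apply sqsum_ge0.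
  rewrite !sqsum_eq. specialize (Hd k). cunf. destruct (u k) as [a b]; simpl.
  assert (0 <= a ^ 2) by apply pow2_ge_0. assert (0 <= b ^ 2) by apply pow2_ge_0.
  assert (d k * d k <= 1) by nra.
  replace ((d k * a - 0 * b) ^ 2 + (d k * b + 0 * a) ^ 2) with ((d k * d k) * (a ^ 2 + b ^ 2)) by ring. nra.
  exact (lv_sq u).
Qed.

Definition dm_f (d : nat -> R) (Hd : forall k, 0 <= d k <= 1) (u : l2) : l2 :=
  L2 (fun k => Cmult (RtoC (d k)) (u k)) (isl2_dm d Hd u).
Lemma dm_lin d Hd : forall (c e0 : C) (u v w : l2),
  (forall k, lv w k = Cplus (Cmult c (lv u k)) (Cmult e0 (lv v k))) ->
  forall k, lv (dm_f d Hd w) k = Cplus (Cmult c (lv (dm_f d Hd u) k)) (Cmult e0 (lv (dm_f d Hd v) k)).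
Proof. intros c e0 u v w H k. unfold dm_f; cbn [lv]. rewrite H. ceq. Qed.
Lemma dm_bdd d Hd : exists M : R, forall u : l2, vnorm (dm_f d Hd u) <= M * vnorm u.
Proof.
  exists 1. intros u. rewrite Rmult_1_l. unfold vnorm. apply sqrt_le_1_alt. unfold dm_f; cbn [lv].
  apply Series_le. intros k. split. apply sqsum_ge0. rewrite !sqsum_eq. specialize (Hd k).
  destruct (u k) as [a b]; cunf.
  assert (0 <= a ^ 2) by apply pow2_ge_0. assert (0 <= b ^ 2) by apply pow2_ge_0.
  assert (d k * d k <= 1) by nra.
  replace ((d k * a - 0 * b) ^ 2 + (d k * b + 0 * a) ^ 2) with ((d k * d k) * (a ^ 2 + b ^ 2)) by ring. nra.
  exact (lv_sq u).
Qed.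
Definition Dm d Hd : op := Op (dm_f d Hd) (dm_lin d Hd) (dm_bdd d Hd).

Lemma Syn_dlt m : PE (adj Ana (l2d m)) (fb m).
Proof.
  intros j. simpl. unfold adjf. simpl. rewrite inner_dlt_l. simpl. rewrite inner_dlt_l. ceq.
Qed.

Lemma Ana_fb k : PE (Ana (fb k)) (dlt k).
Proof. intros j. simpl. rewrite fbfb. unfold dl, dlt. rewrite Nat.eqb_sym. auto. Qed.

Definition Pop (d : nat -> R) (Hd : forall k, 0 <= d k <= 1) : op := opcomp (adj Ana) (opcomp (Dm d Hd) Ana).

Lemma Pop_fb d Hd k : PE (Pop d Hd (fb k)) (fun j => Cmult (RtoC (d k)) (fb k j)).
Proof.
  intros j. unfold Pop. simpl (opcomp _ _ _).
  rewrite (op_scal (adj Ana) (RtoC (d k)) (l2d k) (Dm d Hd (Ana (fb k)))).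
  rewrite Syn_dlt. auto.
  intros i. change (lv (Dm d Hd (Ana (fb k))) i) with (Cmult (RtoC (d i)) (lv (Ana (fb k)) i)). rewrite (Ana_fb k i). cbn [lv l2d]. unfold dlt. destruct (Nat.eqb_spec i k). subst; auto. ceq.
Qed.

Definition iX n : R := if excluded_middle_informative (X n) then 1 else 0.
Definition dP k : R := if Nat.even k then iX (Nat.div2 k) else 0.
Definition dQ k : R := if Nat.even k then 0 else iX (Nat.div2 k).
Lemma iX_b n : 0 <= iX n <= 1.
Proof. unfold iX. destruct (excluded_middle_informative (X n)); lra. Qed.
Lemma dP_b k : 0 <= dP k <= 1.
Proof. unfold dP. destruct (Nat.even k). apply iX_b. lra. Qed.
Lemma dQ_b k : 0 <= dQ k <= 1.
Proof. unfold dQ. destruct (Nat.even k). lra. apply iX_b. Qed.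
Lemma iX_out n : ~ X n -> iX n = 0.
Proof. unfold iX. destruct (excluded_middle_informative (X n)); tauto. Qed.
Lemma iX_in n : X n -> iX n = 1.
Proof. unfold iX. destruct (excluded_middle_informative (X n)); tauto. Qed.

Definition PP := Pop dP dP_b.
Definition QQ := Pop dQ dQ_b.
Definition ci : nat -> C := fun n => RtoC (iX n).

Lemma BD_PP : BD PP ci c0 c0 c0.
Proof.
  intros n. split; [|split].
  - intros k. rewrite <- fb_2n. unfold PP. rewrite Pop_fb. rewrite fb_2n. unfold dP. rewrite even_2n, Nat.div2_double. unfold ci, c0. ceq.
  - intros k. rewrite <- fb_2n1. unfold PP. rewrite Pop_fb. rewrite fb_2n1. unfold dP. rewrite even_2n1. unfold c0. ceq.
  - intros Hx. unfold ci, c0. rewrite iX_out; auto.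
Qed.

Lemma BD_QQ : BD QQ c0 c0 c0 ci.
Proof.
  intros n. split; [|split].
  - intros k. rewrite <- fb_2n. unfold QQ. rewrite Pop_fb. rewrite fb_2n. unfold dQ. rewrite even_2n. unfold c0. ceq.
  - intros k. rewrite <- fb_2n1. unfold QQ. rewrite Pop_fb. rewrite fb_2n1. unfold dQ. rewrite even_2n1, div2_2n1. unfold ci, c0. ceq.
  - intros Hx. unfold ci, c0. rewrite iX_out; auto.
Qed.

Lemma Dset_of (T : op) p q r s : BD T p q r s -> (forall n, q n = RtoC 0 /\ r n = RtoC 0) -> Dset e X alpha T.
Proof.
  intros HB Hz. apply (BD_Dset T p s). apply (BD_coef T p q r s); auto.
  intros n; destruct (Hz n) as [Z1 Z2]; unfold c0; auto.
Qed.

Lemma Dset_BD' (T : op) : Dset e X alpha T -> exists p s, BD T p c0 c0 s.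
Proof. intros H. exists (cE T), (cO T). apply Dset_BD; auto. Qed.

Lemma A0X_BD' (T : op) : A0X e X T -> exists p q r s, BD T p q r s.
Proof. intros H. exists (cE T), (cEO T), (cOE T), (cO T). apply A0X_BD; auto. Qed.

Lemma DK_A0X (T : op) : DK e X alpha T -> A0X e X T.
Proof.
  intros [S [R [HS [HR [HRA Hsum]]]]].
  destruct (Dset_BD' S HS) as [p [s HBS]]. destruct (A0X_BD' R HRA) as [p' [q' [r' [s' HBR]]]].
  eapply BD_A0X. eapply BD_ext. apply (BD_add _ _ _ _ _ _ _ _ _ _ HBS HBR).
  intros u k. rewrite Hsum. reflexivity.
Qed.

Lemma DK_zero : DK e X alpha opz.
Proof.
  exists opz, opz. split; [|split; [|split]].
  - apply (Dset_of opz c0 c0 c0 c0 BD_zero). intros; unfold c0; auto.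
  - apply compact_zero.
  - apply (BD_A0X _ _ _ _ _ BD_zero).
  - intros u k. simpl. ceq.
Qed.

Lemma DK_sum (T1 T2 U : op) : DK e X alpha T1 -> DK e X alpha T2 -> is_sum T1 T2 U -> DK e X alpha U.
Proof.
  intros [S1 [R1 [HS1 [HR1 [HA1 E1]]]]] [S2 [R2 [HS2 [HR2 [HA2 E2]]]]] HU.
  destruct (Dset_BD' S1 HS1) as [p1 [s1 B1]]. destruct (Dset_BD' S2 HS2) as [p2 [s2 B2]].
  destruct (A0X_BD' R1 HA1) as [a1 [b1 [c1 [d1 C1]]]]. destruct (A0X_BD' R2 HA2) as [a2 [b2 [c2 [d2 C2]]]].
  exists (opadd S1 S2), (opadd R1 R2). split; [|split; [|split]].
  - eapply Dset_of. apply (BD_add _ _ _ _ _ _ _ _ _ _ B1 B2). intros n; unfold c0; split; ceq.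
  - apply compact_add; auto.
  - eapply BD_A0X. apply (BD_add _ _ _ _ _ _ _ _ _ _ C1 C2).
  - intros u k. simpl. rewrite HU, E1, E2. ceq.
Qed.

Lemma DK_scal c (T U : op) : DK e X alpha T -> is_scal c T U -> DK e X alpha U.
Proof.
  intros [S [R [HS [HR [HA E]]]]] HU.
  destruct (Dset_BD' S HS) as [p [s B]]. destruct (A0X_BD' R HA) as [a [b [c1 [d C1]]]].
  exists (opscal c S), (opscal c R). split; [|split; [|split]].
  - eapply Dset_of. apply (BD_scal c _ _ _ _ _ B). intros n; unfold c0; split; ceq.
  - apply compact_scal; auto.
  - eapply BD_A0X. apply (BD_scal c _ _ _ _ _ C1).
  - intros u k. simpl. rewrite HU, E. ceq.
Qed.

Lemma DK_comp (T1 T2 U : op) : DK e X alpha T1 -> DK e X alpha T2 -> is_comp T1 T2 U -> DK e X alpha U.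
Proof.
  intros [S1 [R1 [HS1 [HR1 [HA1 E1]]]]] [S2 [R2 [HS2 [HR2 [HA2 E2]]]]] HU.
  destruct (Dset_BD' S1 HS1) as [p1 [s1 B1]]. destruct (Dset_BD' S2 HS2) as [p2 [s2 B2]].
  destruct (A0X_BD' R1 HA1) as [a1 [b1 [c1 [d1 C1]]]]. destruct (A0X_BD' R2 HA2) as [a2 [b2 [c2 [d2 C2]]]].
  exists (opcomp S1 S2), (opadd (opadd (opcomp S1 R2) (opcomp R1 S2)) (opcomp R1 R2)).
  split; [|split; [|split]].
  - eapply Dset_of. apply (BD_comp _ _ _ _ _ _ _ _ _ _ B2 B1). intros n; unfold c0; split; ceq.
  - apply compact_add. apply compact_add. apply compact_comp_l; auto. apply compact_comp_r; auto.
    apply compact_comp_l; auto.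
  - eapply BD_A0X. apply BD_add. apply BD_add.
    apply (BD_comp _ _ _ _ _ _ _ _ _ _ C2 B1). apply (BD_comp _ _ _ _ _ _ _ _ _ _ B2 C1).
    apply (BD_comp _ _ _ _ _ _ _ _ _ _ C2 C1).
  - intros u k. simpl. rewrite HU, E1.
    rewrite (op_add S1 (S2 u) (R2 u) (T2 u) (E2 u)). rewrite (op_add R1 (S2 u) (R2 u) (T2 u) (E2 u)). ceq.
Qed.

Lemma DK_adj (T : op) : DK e X alpha T -> exists U, DK e X alpha U /\ is_adjoint T U.
Proof.
  intros [S [R [HS [HR [HA E]]]]]. exists (adj T). split; [|apply adj_is_adjoint].
  destruct (Dset_BD' S HS) as [p [s B]]. destruct (A0X_BD' R HA) as [a [b [c1 [d C1]]]].
  exists (adj S), (adj R). split; [|split; [|split]].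
  - eapply Dset_of. apply (BD_adj _ _ _ _ _ B). intros n; unfold c0; split; ceq.
  - apply compact_adj; auto.
  - eapply BD_A0X. apply (BD_adj _ _ _ _ _ C1).
  - intros v k. simpl. unfold adjf.
    rewrite (inner_ext v v (T (l2d k)) (fun j => Cplus (Cmult (RtoC 1) (S (l2d k) j)) (Cmult (RtoC 1) (R (l2d k) j)))).
    rewrite inner_lin2 by auto. ceq. intros j; auto. intros j. rewrite E. ceq.
Qed.

Definition Diag (T : op) := opadd (opcomp PP (opcomp T PP)) (opcomp QQ (opcomp T QQ)).
Definition Off (T : op) := opadd (opcomp PP (opcomp T QQ)) (opcomp QQ (opcomp T PP)).

Lemma BD_Diag (T : op) p q r s : BD T p q r s -> exists p' q' r' s', BD (Diag T) p' q' r' s' /\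
  (forall n, q' n = RtoC 0 /\ r' n = RtoC 0) /\ (forall n, X n -> p' n = p n /\ s' n = s n).
Proof.
  intros HB. eexists; eexists; eexists; eexists. split.
  exact (BD_add _ _ _ _ _ _ _ _ _ _ (BD_comp PP (opcomp T PP) _ _ _ _ _ _ _ _ (BD_comp T PP _ _ _ _ _ _ _ _ BD_PP HB) BD_PP)
    (BD_comp QQ (opcomp T QQ) _ _ _ _ _ _ _ _ (BD_comp T QQ _ _ _ _ _ _ _ _ BD_QQ HB) BD_QQ)).
  split. intros n; unfold c0, ci; split; ceq.
  intros n Hx. unfold c0, ci. rewrite iX_in by auto. split; ceq.
Qed.

Lemma BD_Off (T : op) p q r s : BD T p q r s -> exists p' q' r' s', BD (Off T) p' q' r' s' /\
  (forall n, X n -> p' n = RtoC 0 /\ q' n = q n /\ r' n = r n /\ s' n = RtoC 0).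
Proof.
  intros HB. eexists; eexists; eexists; eexists. split.
  exact (BD_add _ _ _ _ _ _ _ _ _ _ (BD_comp PP (opcomp T QQ) _ _ _ _ _ _ _ _ (BD_comp T QQ _ _ _ _ _ _ _ _ BD_QQ HB) BD_PP)
    (BD_comp QQ (opcomp T PP) _ _ _ _ _ _ _ _ (BD_comp T PP _ _ _ _ _ _ _ _ BD_PP HB) BD_QQ)).
  intros n Hx. unfold c0, ci. rewrite iX_in by auto. repeat split; ceq.
Qed.

Lemma Diag_Dset (T : op) : A0X e X T -> Dset e X alpha (Diag T).
Proof.
  intros HA. destruct (A0X_BD' T HA) as [p [q [r [s HB]]]].
  destruct (BD_Diag T p q r s HB) as [p' [q' [r' [s' [H1 [H2 _]]]]]]. eapply Dset_of; eauto.
Qed.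

Lemma Off_A0X (T : op) : A0X e X T -> A0X e X (Off T).
Proof.
  intros HA. destruct (A0X_BD' T HA) as [p [q [r [s HB]]]].
  destruct (BD_Off T p q r s HB) as [p' [q' [r' [s' [H1 _]]]]]. eapply BD_A0X; eauto.
Qed.

Lemma T_decomp (T : op) : A0X e X T -> is_sum (Diag T) (Off T) T.
Proof.
  intros HA. destruct (A0X_BD' T HA) as [p [q [r [s HB]]]].
  destruct (BD_Diag T p q r s HB) as [p' [q' [r' [s' [H1 [H2 H3]]]]]].
  destruct (BD_Off T p q r s HB) as [p2 [q2 [r2 [s2 [G1 G3]]]]].
  intros u k. change (Cplus (Diag T u k) (Off T u k)) with (opadd (Diag T) (Off T) u k).
  apply (BD_eq T (opadd (Diag T) (Off T)) _ _ _ _ _ _ _ _ HB (BD_add _ _ _ _ _ _ _ _ _ _ H1 G1)).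
  intros n Hx. destruct (H2 n) as [Z1 Z2]. destruct (H3 n Hx) as [Y1 Y2]. destruct (G3 n Hx) as [W1 [W2 [W3 W4]]].
  rewrite Z1, Z2, Y1, Y2, W1, W2, W3, W4. repeat split; ceq.
Qed.

Definition Kc (T : op) := opsub (opcomp T PP) (opcomp PP T).

Lemma Off_K (T : op) : A0X e X T -> forall u, PE (Off T u) (opsub (opcomp QQ (Kc T)) (opcomp PP (Kc T)) u).
Proof.
  intros HA. destruct (A0X_BD' T HA) as [p [q [r [s HB]]]].
  destruct (BD_Off T p q r s HB) as [p2 [q2 [r2 [s2 [G1 G3]]]]].
  eapply (BD_eq _ _ _ _ _ _ _ _ _ _ G1).
  assert (BK := BD_add _ _ _ _ _ _ _ _ _ _ (BD_comp T PP _ _ _ _ _ _ _ _ BD_PP HB)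
     (BD_scal (RtoC (-1)) _ _ _ _ _ (BD_comp PP T _ _ _ _ _ _ _ _ HB BD_PP))).
  exact (BD_add _ _ _ _ _ _ _ _ _ _ (BD_comp QQ (Kc T) _ _ _ _ _ _ _ _ BK BD_QQ)
     (BD_scal (RtoC (-1)) _ _ _ _ _ (BD_comp PP (Kc T) _ _ _ _ _ _ _ _ BK BD_PP))).
  intros n Hx. destruct (G3 n Hx) as [W1 [W2 [W3 W4]]]. rewrite W1, W2, W3, W4.
  unfold c0, ci. rewrite iX_in by auto. repeat split; ceq.
Qed.

Lemma Off_compact (T : op) (K0 : op) : A0X e X T -> compact_op K0 ->
  (forall u k, lv (K0 u) k = Cminus (lv (T (PP u)) k) (lv (PP (T u)) k)) -> compact_op (Off T).
Proof.
  intros HA HK HKe.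
  apply (compact_ext (opsub (opcomp QQ K0) (opcomp PP K0))).
  unfold opsub. apply compact_add. apply compact_comp_l; auto. apply compact_scal. apply compact_comp_l; auto.
  intros u k. rewrite (Off_K T HA u k). unfold opsub. cbn [app opadd opscal opcomp l2add l2scal lv].
  rewrite (op_ext QQ (Kc T u) (K0 u)), (op_ext PP (Kc T u) (K0 u)). auto.
  intros j. rewrite HKe. unfold Kc, opsub. cbn [app opadd opscal opcomp l2add l2scal lv]. ceq.
  intros j. rewrite HKe. unfold Kc, opsub. cbn [app opadd opscal opcomp l2add l2scal lv]. ceq.
Qed.

Lemma PP_DK : DK e X alpha PP.
Proof.
  exists PP, opz. split; [|split; [|split]].
  - apply (Dset_of PP ci c0 c0 c0 BD_PP). intros; unfold c0; auto.
  - apply compact_zero.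
  - apply (BD_A0X _ _ _ _ _ BD_zero).
  - intros u k. simpl. ceq.
Qed.

Lemma DK_of_Off (T : op) : A0X e X T -> compact_op (Off T) -> DK e X alpha T.
Proof.
  intros HA HC. exists (Diag T), (Off T). split; [|split; [|split]].
  apply Diag_Dset; auto. auto. apply Off_A0X; auto. apply T_decomp; auto.
Qed.
Lemma small_zero x : (forall eps, 0 < eps -> Rabs x <= eps) -> x = 0.
Proof.
  intros H. destruct (Req_dec x 0) as [E|E]; auto. exfalso.
  assert (H0 : 0 < Rabs x) by (apply Rabs_pos_lt; auto).
  assert (H1 := H (Rabs x / 2) ltac:(lra)). lra.
Qed.

Lemma vnorm_e k : vnorm (e k) = 1.
Proof.
  assert (H := inner_self (e k) (lv_sq _)). rewrite ee in H. unfold dl in H. rewrite Nat.eqb_refl in H.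
  unfold vnorm. fold (nsq (e k)). unfold RtoC in H. injection H. intros E. rewrite <- E. apply sqrt_1.
Qed.

Lemma A0X_lim (Tn : nat -> op) (T : op) : (forall n, A0X e X (Tn n)) -> op_norm_cvg Tn T -> A0X e X T.
Proof.
  intros HA Hc.
  assert (Hd : forall k eps, 0 < eps -> exists n, vnorm (fun j => Cminus (Tn n (e k) j) (T (e k) j)) <= eps).
  { intros k eps He0. destruct (Hc eps He0) as [N HN]. exists N. specialize (HN N (le_n _) (e k)). rewrite vnorm_e in HN. lra. }
  split.
  - intros k m Hne. destruct (classic (exists n, in_block k n /\ in_block m n)) as [H|H]; auto.
    exfalso. apply Hne.
    assert (Z : forall n, inner (Tn n (e k)) (e m) = RtoC 0).
    { intros n. destruct (classic (inner (Tn n (e k)) (e m) = RtoC 0)) as [E|E]; auto.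
      destruct (HA n) as [HA1 _]. exfalso. apply H. apply HA1; auto. }
    assert (Es : forall n, inner (T (e k)) (e m) = Copp (inner (fun j => Cminus (Tn n (e k) j) (T (e k) j)) (e m))).
    { intros n. rewrite inner_sub by auto. rewrite Z. ceq. }
    unfold RtoC. apply injective_projections; cbn [fst snd]; apply small_zero; intros eps He0;
    destruct (Hd k eps He0) as [n Hn]; rewrite (Es n); unfold Copp; cbn [fst snd]; rewrite Rabs_Ropp.
    + eapply Rle_trans. apply cs_re; auto. apply isl2_sub; auto. rewrite vnorm_e. lra.
    + eapply Rle_trans. apply cs_im; auto. apply isl2_sub; auto. rewrite vnorm_e. lra.
  - intros n Hn k Hk j. apply vnorm0_zero; auto.
    apply Rle_antisym; [|apply vnorm_ge0].
    cut (forall eps, 0 < eps -> vnorm (T (e k)) <= eps).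
    { intros H. assert (H0 := vnorm_ge0 (T (e k))). destruct (Req_dec (vnorm (T (e k))) 0) as [E|E]. lra.
      assert (H1 := H (vnorm (T (e k)) / 2) ltac:(lra)). lra. }
    intros eps He0. destruct (Hd k eps He0) as [m Hm].
    assert (Z : PE (Tn m (e k)) (fun _ => RtoC 0)).
    { intros i. destruct (HA m) as [_ HZ]. apply (HZ n Hn k Hk). }
    assert (T1 := vnorm_sub_tri (T (e k)) (Tn m (e k)) (fun _ => RtoC 0) (lv_sq _) (lv_sq _) isl2_zero). cbv beta in T1.
    rewrite (vnorm_ext (fun k0 => Cminus (T (e k) k0) (RtoC 0)) (T (e k))) in T1 by (intros i; ceq).
    rewrite (vnorm_ext (fun k0 => Cminus (Tn m (e k) k0) (RtoC 0)) (fun _ => RtoC 0)) in T1 by (intros i; rewrite Z; ceq).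
    rewrite vnorm_zero in T1. rewrite vnorm_sub_sym in T1 by auto. lra.
Qed.

Lemma cvg_add (An Bn : nat -> op) A B : op_norm_cvg An A -> op_norm_cvg Bn B ->
  op_norm_cvg (fun n => opadd (An n) (Bn n)) (opadd A B).
Proof.
  intros H1 H2 eps He0. destruct (H1 (eps/2)) as [N1 HN1]. lra. destruct (H2 (eps/2)) as [N2 HN2]. lra.
  exists (max N1 N2). intros n Hn u. cbn [app opadd l2add lv].
  rewrite (vnorm_ext _ (fun k => Cplus (Cminus (An n u k) (A u k)) (Cminus (Bn n u k) (B u k)))) by (intros k; ceq).
  eapply Rle_trans. apply vnorm_tri; apply isl2_sub; auto.
  specialize (HN1 n ltac:(lia) u). specialize (HN2 n ltac:(lia) u). lra.
Qed.

Lemma cvg_comp3 (A B : op) (Tn : nat -> op) T : op_norm_cvg Tn T ->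
  op_norm_cvg (fun n => opcomp A (opcomp (Tn n) B)) (opcomp A (opcomp T B)).
Proof.
  intros H eps He0. destruct (op_bound A) as [MA [HA0 HA]]. destruct (op_bound B) as [MB [HB0 HB]].
  set (eps' := eps / ((MA + 1) * (MB + 1))).
  assert (He' : 0 < eps') by (unfold eps'; apply Rdiv_lt_0_compat; nra).
  destruct (H eps' He') as [N HN]. exists N. intros n Hn u. cbn [app opcomp].
  eapply Rle_trans. apply (op_diff A MA HA).
  assert (H1 := HN n Hn (B u)). assert (H2 := HB u).
  assert (Hu : 0 <= vnorm u) by apply vnorm_ge0.
  assert (Hkey : MA * (eps' * (MB * vnorm u)) <= eps * vnorm u).
  { unfold eps'.
    replace (MA * (eps / ((MA + 1) * (MB + 1)) * (MB * vnorm u))) with (eps * vnorm u * ((MA / (MA+1)) * (MB / (MB+1)))) by (field; lra).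
    destruct (eps_scale MA 1 HA0 Rlt_0_1) as [Q1 _]. destruct (eps_scale MB 1 HB0 Rlt_0_1) as [Q2 _].
    assert (R1 : 0 <= MA / (MA + 1)) by (apply Rdiv_le_0_compat; lra).
    assert (R2 : 0 <= MB / (MB + 1)) by (apply Rdiv_le_0_compat; lra).
    assert (R3 : MA / (MA + 1) <= 1) by (unfold Rdiv in *; lra).
    assert (R4 : MB / (MB + 1) <= 1) by (unfold Rdiv in *; lra).
    assert (0 <= eps * vnorm u) by nra.
    assert (MA / (MA + 1) * (MB / (MB + 1)) <= 1) by nra. nra. }
  eapply Rle_trans; [|apply Hkey]. apply Rmult_le_compat_l; auto.
  eapply Rle_trans. apply H1. apply Rmult_le_compat_l. lra. auto.
Qed.

Lemma DK_lim (Tn : nat -> op) (T : op) : (forall n, DK e X alpha (Tn n)) -> op_norm_cvg Tn T -> DK e X alpha T.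
Proof.
  intros HD Hc. assert (HA : A0X e X T) by (apply (A0X_lim Tn); auto; intros n; apply DK_A0X; auto).
  apply DK_of_Off; auto.
  apply (compact_limit (fun n => Off (Tn n))).
  - intros n. destruct (HD n) as [S [R [HS [HR [HRA E]]]]].
    apply (compact_ext (Off R)).
    unfold Off. apply compact_add; apply compact_comp_l; apply compact_comp_r; auto.
    destruct (Dset_BD' S HS) as [p [s B]]. destruct (A0X_BD' R HRA) as [a [b [c1 [d C1]]]].
    assert (BT := BD_ext _ (Tn n) _ _ _ _ (BD_add _ _ _ _ _ _ _ _ _ _ B C1) (fun u k => E u k)).
    destruct (BD_Off (Tn n) _ _ _ _ BT) as [p2 [q2 [r2 [s2 [G1 G3]]]]].
    destruct (BD_Off R _ _ _ _ C1) as [p3 [q3 [r3 [s3 [F1 F3]]]]].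
    apply (BD_eq _ _ _ _ _ _ _ _ _ _ G1 F1).
    intros m Hx. destruct (G3 m Hx) as [W1 [W2 [W3 W4]]]. destruct (F3 m Hx) as [V1 [V2 [V3 V4]]].
    rewrite W1, W2, W3, W4, V1, V2, V3, V4. unfold c0. repeat split; ceq.
  - apply (cvg_add (fun n => opcomp PP (opcomp (Tn n) QQ)) (fun n => opcomp QQ (opcomp (Tn n) PP)));
    apply cvg_comp3; auto.
Qed.

Lemma DK_comm (T1 T2 : op) : DK e X alpha T1 -> DK e X alpha T2 -> almost_commute T1 T2.
Proof.
  intros [S1 [R1 [HS1 [HR1 [HA1 E1]]]]] [S2 [R2 [HS2 [HR2 [HA2 E2]]]]].
  destruct (Dset_BD' S1 HS1) as [p1 [s1 B1]]. destruct (Dset_BD' S2 HS2) as [p2 [s2 B2]].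
  assert (Hc : forall u, PE (opcomp S1 S2 u) (opcomp S2 S1 u)).
  { apply (BD_eq _ _ _ _ _ _ _ _ _ _ (BD_comp S1 S2 _ _ _ _ _ _ _ _ B2 B1) (BD_comp S2 S1 _ _ _ _ _ _ _ _ B1 B2)).
    intros n _. unfold c0. repeat split; ceq. }
  exists (opsub (opadd (opadd (opcomp S1 R2) (opcomp R1 S2)) (opcomp R1 R2))
                (opadd (opadd (opcomp S2 R1) (opcomp R2 S1)) (opcomp R2 R1))).
  split.
  - unfold opsub. apply compact_add.
    + apply compact_add. apply compact_add. apply compact_comp_l; auto. apply compact_comp_r; auto. apply compact_comp_l; auto.
    + apply compact_scal. apply compact_add. apply compact_add. apply compact_comp_l; auto. apply compact_comp_r; auto. apply compact_comp_l; auto.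
  - intros u k. unfold opsub. cbn [app opadd opscal opcomp l2add l2scal lv].
    rewrite E1, E2.
    rewrite (op_add S1 (S2 u) (R2 u) (T2 u) (E2 u) k), (op_add R1 (S2 u) (R2 u) (T2 u) (E2 u) k).
    rewrite (op_add S2 (S1 u) (R1 u) (T1 u) (E1 u) k), (op_add R2 (S1 u) (R1 u) (T1 u) (E1 u) k).
    assert (H := Hc u k). cbn [app opcomp] in H. rewrite H. ceq.
Qed.

Lemma DK_max (B : op -> Prop) : cstar_subalg B (A0X e X) -> pairwise_almost_commuting B ->
  (forall T, DK e X alpha T -> B T) -> forall T, B T -> DK e X alpha T.
Proof.
  intros [_ HBA] Hpc Hsub T HT. assert (HA := HBA T HT).
  destruct (Hpc T PP HT (Hsub PP PP_DK)) as [K0 [HK0 HK0e]].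
  apply DK_of_Off; auto. apply (Off_compact T K0); auto.
Qed.

End Blocks.

Theorem lemma4p8 (e : nat -> l2) (He : is_ONB e) (X : nat -> Prop) (alpha : R)
  (Halpha : 71 / 72 < alpha <= 1) :
  almost_masa (DK e X alpha) (A0X e X).
Proof.
  assert (Ha : 0 < alpha <= 1) by lra.
  split; [split|split].
  - split; [|split; [|split; [|split; [|split]]]].
    + exists opz. split. eapply DK_zero; eauto. intros u k; reflexivity.
    + intros S T U HS HT HU. eapply DK_sum with (T1 := S) (T2 := T); eauto.
    + intros c T U HT HU. eapply DK_scal; eauto.
    + intros S T U HS HT HU. eapply DK_comp with (T1 := S) (T2 := T); eauto.
    + intros T HT. eapply DK_adj; eauto.
    + intros Tn T HTn Hc. eapply DK_lim; eauto.
  - intros T HT. eapply DK_A0X; eauto.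
  - intros S T HS HT. eapply DK_comm; eauto.
  - intros B HB Hpc Hsub T HT. eapply DK_max; eauto.
Qed.
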